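(* Let $n=3$, $I_1=\{1,2\}$, $I_2=\{1,3\}$, and $f=f_1+f_2$ with $$f_1=8+\tfrac12x_1^2x_2^4+(x_1^2-2x_1^3)x_2^3+(2x_1+10x_1^2+4x_1^3+3x_1^4)x_2^2+4(x_1-2x_1^2)x_2,\qquad f_2=x_1^2x_3^2.$$ Then $f$ is nonnegative on $\mathbb R^3$, there are no $\sigma_1\in\Sigma[x(I_1)]$, $\sigma_2\in\Sigma[x(I_2)]$ with $f=\sigma_1+\sigma_2$, but there exist $\sigma_1\in\Sigma[x(I_1)]_7$, $\sigma_2\in\Sigma[x(I_2)]_7$ with $$f=\frac{\sigma_1}{\Theta_1^2}+\frac{\sigma_2}{\Theta_2^2},\qquad \Theta_1=(x_1^2+x_2^2+1)(x_1^2+1),\ \Theta_2=(x_1^2+x_3^2+1)(x_1^2+1).$$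
   Context: For $T\subseteq\{1,\dots,n\}$, $x(T)=(x_i)_{i\in T}$; $\Sigma[x(T)]$ is the set of sums of squares of polynomials in the variables $x(T)$, and $\Sigma[x(T)]_t$ those sums of squares of polynomials of degree at most $t$. *)

(* Defs.v *)
From Stdlib Require Import Reals List.
Open Scope R_scope.

Record mono := Mono { mc : R; e1 : nat; e2 : nat; e3 : nat }.

Definition mono_eval (m : mono) (x1 x2 x3 : R) : R :=
  mc m * x1 ^ e1 m * x2 ^ e2 m * x3 ^ e3 m.

Definition poly := list mono.

Definition peval (p : poly) (x1 x2 x3 : R) : R :=
  fold_right (fun m acc => mono_eval m x1 x2 x3 + acc) 0 p.

Definition mono_in (T : list nat) (t : nat) (m : mono) : Prop :=
  (e1 m <> 0%nat -> In 1%nat T) /\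
  (e2 m <> 0%nat -> In 2%nat T) /\
  (e3 m <> 0%nat -> In 3%nat T) /\
  (e1 m + e2 m + e3 m <= t)%nat.

Definition poly_in (T : list nat) (t : nat) (p : poly) : Prop :=
  Forall (mono_in T t) p.

Definition sos_eval (s : list poly) (x1 x2 x3 : R) : R :=
  fold_right (fun p acc => (peval p x1 x2 x3) ^ 2 + acc) 0 s.

Definition SOS_deg (T : list nat) (t : nat) (sigma : R -> R -> R -> R) : Prop :=
  exists s : list poly, Forall (poly_in T t) s /\
    forall x1 x2 x3, sigma x1 x2 x3 = sos_eval s x1 x2 x3.

Definition SOS (T : list nat) (sigma : R -> R -> R -> R) : Prop :=
  exists t, SOS_deg T t sigma.

Definition I1 : list nat := 1%nat :: 2%nat :: nil.
Definition I2 : list nat := 1%nat :: 3%nat :: nil.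

Definition f1 (x1 x2 x3 : R) : R :=
  8 + /2 * x1^2 * x2^4 + (x1^2 - 2 * x1^3) * x2^3
  + (2 * x1 + 10 * x1^2 + 4 * x1^3 + 3 * x1^4) * x2^2
  + 4 * (x1 - 2 * x1^2) * x2.

Definition f2 (x1 x2 x3 : R) : R := x1^2 * x3^2.

Definition fpoly (x1 x2 x3 : R) : R := f1 x1 x2 x3 + f2 x1 x2 x3.

Definition Theta1 (x1 x2 x3 : R) : R := (x1^2 + x2^2 + 1) * (x1^2 + 1).
Definition Theta2 (x1 x2 x3 : R) : R := (x1^2 + x3^2 + 1) * (x1^2 + 1).

(* Main.v *)
Require Import Defs.
From Stdlib Require Import Reals List ZArith Lra Lia Psatz.
Open Scope R_scope.

Lemma sos_eval_nonneg s x1 x2 x3 : 0 <= sos_eval s x1 x2 x3.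
Proof.
  induction s as [|p s IH]; simpl; [lra|].
  assert (0 <= peval p x1 x2 x3 ^ 2) by (rewrite <- Rsqr_pow2; apply Rle_0_sqr). lra.
Qed.

Lemma sos_eval_app s t x1 x2 x3 :
  sos_eval (s ++ t) x1 x2 x3 = sos_eval s x1 x2 x3 + sos_eval t x1 x2 x3.
Proof. induction s as [|p s IH]; simpl; [ring| rewrite IH; ring]. Qed.

Lemma sos_eval_le p s x1 x2 x3 : In p s -> peval p x1 x2 x3 ^ 2 <= sos_eval s x1 x2 x3.
Proof.
  induction s as [|q s IH]; simpl; [tauto|].
  intros [->|H].
  - pose proof (sos_eval_nonneg s x1 x2 x3); lra.
  - specialize (IH H). assert (0 <= peval q x1 x2 x3 ^ 2) by (rewrite <- Rsqr_pow2; apply Rle_0_sqr). lra.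
Qed.

Definition phiw (w1 w2 w3 : Z) (m : mono) : Z :=
  (w1 * Z.of_nat (e1 m) + w2 * Z.of_nat (e2 m) + w3 * Z.of_nat (e3 m))%Z.

Lemma pow_scale y t w n : 0 < t ->
  (y * powerRZ t w) ^ n = y ^ n * powerRZ t (w * Z.of_nat n).
Proof.
  intros Ht. induction n as [|n IH].
  - simpl. rewrite Z.mul_0_r. simpl. ring.
  - rewrite Nat2Z.inj_succ, Z.mul_succ_r, powerRZ_add by lra.
    simpl pow. rewrite IH. ring.
Qed.

Definition pevalw (p : list mono) (y1 y2 y3 t : R) (w1 w2 w3 : Z) : R :=
  fold_right (fun m acc => mono_eval m y1 y2 y3 * powerRZ t (phiw w1 w2 w3 m) + acc) 0 p.

Lemma peval_scale p y1 y2 y3 t w1 w2 w3 : 0 < t ->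
  peval p (y1 * powerRZ t w1) (y2 * powerRZ t w2) (y3 * powerRZ t w3)
  = pevalw p y1 y2 y3 t w1 w2 w3.
Proof.
  intros Ht. induction p as [|m p IH]; simpl; [reflexivity|].
  rewrite IH. f_equal. unfold mono_eval, phiw.
  rewrite !pow_scale by lra.
  rewrite !powerRZ_add by lra. ring.
Qed.

Lemma powerRZ_ge1 t k : 1 <= t -> (0 <= k)%Z -> 1 <= powerRZ t k.
Proof.
  intros Ht Hk. destruct (Z_of_nat_complete k Hk) as [n ->].
  rewrite <- pow_powerRZ. apply pow_R1_Rle. exact Ht.
Qed.

Lemma powerRZ_mono t n m : 1 <= t -> (n <= m)%Z -> powerRZ t n <= powerRZ t m.
Proof.
  intros Ht Hnm. replace m with (n + (m - n))%Z by lia.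
  rewrite powerRZ_add by lra.
  pose proof (powerRZ_lt t n ltac:(lra)).
  pose proof (powerRZ_ge1 t (m - n) Ht ltac:(lia)). nra.
Qed.

Definition gv (l : list (R * Z)) (t : R) : R :=
  fold_right (fun p acc => fst p * powerRZ t (snd p) + acc) 0 l.
Definition gA (l : list (R * Z)) : R := fold_right (fun p acc => Rabs (fst p) + acc) 0 l.

Lemma gA_nonneg l : 0 <= gA l.
Proof. induction l; simpl; [lra|]. pose proof (Rabs_pos (fst a)); lra. Qed.

Lemma gv_bound l t M : 1 <= t -> (forall p, In p l -> (snd p <= M)%Z) ->
  Rabs (gv l t) <= gA l * powerRZ t M.
Proof.
  intros Ht. induction l as [|p l IH]; intros H; simpl.
  - rewrite Rabs_R0. lra.
  - eapply Rle_trans; [apply Rabs_triang|].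
    rewrite Rabs_mult.
    pose proof (powerRZ_lt t (snd p) ltac:(lra)).
    rewrite (Rabs_right (powerRZ t (snd p))) by lra.
    pose proof (powerRZ_mono t (snd p) M Ht (H p (or_introl eq_refl))).
    pose proof (Rabs_pos (fst p)).
    assert (IH' := IH (fun q Hq => H q (or_intror Hq))).
    nra.
Qed.

Definition maxz (l : list (R * Z)) (d : Z) : Z := fold_right (fun p acc => Z.max (snd p) acc) d l.

Lemma maxz_ge l d p : In p l -> (snd p <= maxz l d)%Z.
Proof. induction l; simpl; [tauto|]. intros [->|H]; [lia|]. specialize (IHl H). lia. Qed.
Lemma maxz_ge_d l d : (d <= maxz l d)%Z.
Proof. induction l; simpl; lia. Qed.
Lemma maxz_att l d : maxz l d = d \/ exists p, In p l /\ snd p = maxz l d.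
Proof.
  induction l as [|q l IH]; simpl; [auto|].
  destruct (Z.max_spec (snd q) (maxz l d)) as [[H1 H2]|[H1 H2]]; rewrite H2.
  - destruct IH as [IH|[p [Hp Hp']]]; [left; auto| right; exists p; auto].
  - right. exists q. auto.
Qed.

Lemma filter_len_lt {A} (f : A -> bool) l : (exists x, In x l /\ f x = false) ->
  (length (filter f l) < length l)%nat.
Proof.
  induction l as [|a l IH]; simpl; [intros [x [[] _]]|].
  intros [x [[->|Hx] Hf]].
  - rewrite Hf. pose proof (filter_length_le f l). lia.
  - specialize (IH (ex_intro _ x (conj Hx Hf))). destruct (f a); simpl; lia.
Qed.

Lemma gv_split l N t :
  gv l t = gv (filter (fun p => Z.eqb (snd p) N) l) t + gv (filter (fun p => negb (Z.eqb (snd p) N)) l) t.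
Proof.
  induction l as [|p l IH]; simpl; [ring|].
  destruct (Z.eqb (snd p) N); simpl; rewrite IH; ring.
Qed.

Lemma gv_eqN l N t : gv (filter (fun p => Z.eqb (snd p) N) l) t
  = fold_right (fun p acc => fst p + acc) 0 (filter (fun p => Z.eqb (snd p) N) l) * powerRZ t N.
Proof.
  induction l as [|p l IH]; simpl; [ring|].
  destruct (Z.eqb (snd p) N) eqn:E; simpl; rewrite IH; [|ring].
  apply Z.eqb_eq in E. rewrite E. ring.
Qed.

Lemma gp_zero : forall n l B K,
  length l = n ->
  (forall p, In p l -> (B < snd p)%Z) ->
  (forall t, 1 <= t -> Rabs (gv l t) <= K * powerRZ t B) ->
  forall t, 1 <= t -> gv l t = 0.
Proof.
  intro n. induction n as [n IH] using (well_founded_induction lt_wf).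
  intros l B K Hn HB Hb t Ht.
  destruct l as [|p0 l0] eqn:El; [reflexivity|].
  rewrite <- El in *.
  set (N := maxz l (snd p0)).
  set (c := fold_right (fun p acc => fst p + acc) 0 (filter (fun p => Z.eqb (snd p) N) l)).
  set (rest := filter (fun p => negb (Z.eqb (snd p) N)) l).
  assert (Hsplit : forall t, gv l t = c * powerRZ t N + gv rest t).
  { intro s. rewrite (gv_split l N s). rewrite gv_eqN. reflexivity. }
  assert (HNl : forall p, In p l -> (snd p <= N)%Z).
  { intros p Hp. apply maxz_ge. exact Hp. }
  assert (HBN : (B < N)%Z).
  { apply (Z.lt_le_trans _ (snd p0)). apply HB. rewrite El; left; auto. apply maxz_ge_d. }
  assert (Hrest : forall p, In p rest -> (snd p <= N - 1)%Z).
  { intros p Hp. unfold rest in Hp. apply filter_In in Hp as [Hp Hq].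
    apply Bool.negb_true_iff, Z.eqb_neq in Hq. specialize (HNl p Hp). lia. }
  assert (Hc : c = 0).
  { destruct (Req_dec c 0) as [|Hc]; [assumption|exfalso].
    set (A := gA rest).
    assert (HA : 0 <= A) by apply gA_nonneg.
    assert (Hgen : forall s, 1 <= s -> Rabs c * s <= Rabs K + A).
    { intros s Hs.
      pose proof (Hb s Hs) as H1. rewrite Hsplit in H1.
      pose proof (gv_bound rest s (N - 1) Hs Hrest) as H2. fold A in H2.
      assert (HP : powerRZ s N = powerRZ s (N - 1) * s).
      { replace N with ((N - 1) + 1)%Z at 1 by lia. rewrite powerRZ_add by lra.
        change (powerRZ s 1) with (s * 1). ring. }
      assert (HP1 : 0 < powerRZ s (N - 1)) by (apply powerRZ_lt; lra).
      assert (HPB : powerRZ s B <= powerRZ s (N - 1)) by (apply powerRZ_mono; [lra|lia]).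
      assert (HPBp : 0 < powerRZ s B) by (apply powerRZ_lt; lra).
      assert (H3 : Rabs (c * powerRZ s N) <= Rabs K * powerRZ s (N-1) + A * powerRZ s (N-1)).
      { pose proof (Rabs_triang (c * powerRZ s N + gv rest s) (- gv rest s)) as H4.
        replace (c * powerRZ s N + gv rest s + - gv rest s) with (c * powerRZ s N) in H4 by ring.
        rewrite Rabs_Ropp in H4.
        pose proof (Rle_abs K).
        assert (K * powerRZ s B <= Rabs K * powerRZ s B) by (apply Rmult_le_compat_r; lra).
        assert (Rabs K * powerRZ s B <= Rabs K * powerRZ s (N-1)) by (apply Rmult_le_compat_l; [apply Rabs_pos|lra]).
        lra. }
      rewrite Rabs_mult, HP in H3.
      rewrite (Rabs_right (powerRZ s (N - 1) * s)) in H3 by nra.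
      nra. }
    assert (Hcp : 0 < Rabs c) by (apply Rabs_pos_lt; exact Hc).
    pose proof (Rabs_pos K).
    specialize (Hgen ((Rabs K + A) / Rabs c + 1)).
    assert (1 <= (Rabs K + A) / Rabs c + 1).
    { assert (0 <= (Rabs K + A) / Rabs c) by (apply Rmult_le_pos; [lra| apply Rlt_le, Rinv_0_lt_compat; lra]). lra. }
    specialize (Hgen H0).
    assert (Rabs c * ((Rabs K + A) / Rabs c + 1) = Rabs K + A + Rabs c) by (field; lra).
    lra. }
  assert (Heq : forall s, gv l s = gv rest s).
  { intro s. rewrite Hsplit, Hc. ring. }
  rewrite Heq.
  assert (Hlt : (length rest < n)%nat).
  { rewrite <- Hn. unfold rest. apply filter_len_lt.
    destruct (maxz_att l (snd p0)) as [Hd|[p [Hp Hp']]].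
    - exists p0. split; [rewrite El; left; auto|]. fold N in Hd. rewrite Hd, Z.eqb_refl. reflexivity.
    - exists p. split; [exact Hp|]. fold N in Hp'. rewrite Hp', Z.eqb_refl. reflexivity. }
  apply (IH (length rest) Hlt rest B K eq_refl).
  - intros p Hp. unfold rest in Hp. apply filter_In in Hp as [Hp _]. apply HB. exact Hp.
  - intros s Hs. rewrite <- Heq. apply Hb. exact Hs.
  - exact Ht.
Qed.

Lemma pevalw_split f p y1 y2 y3 t w1 w2 w3 :
  pevalw p y1 y2 y3 t w1 w2 w3 = pevalw (filter f p) y1 y2 y3 t w1 w2 w3
    + pevalw (filter (fun m => negb (f m)) p) y1 y2 y3 t w1 w2 w3.
Proof. induction p as [|m p IH]; simpl; [ring|]. destruct (f m); simpl; rewrite IH; ring. Qed.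

Lemma pevalw_gv q y1 y2 y3 t w1 w2 w3 :
  pevalw q y1 y2 y3 t w1 w2 w3 = gv (map (fun m => (mono_eval m y1 y2 y3, phiw w1 w2 w3 m)) q) t.
Proof. induction q as [|m q IH]; simpl; [reflexivity|]. rewrite IH. reflexivity. Qed.

Lemma peval_w1 q y1 y2 y3 w1 w2 w3 : peval q y1 y2 y3 = pevalw q y1 y2 y3 1 w1 w2 w3.
Proof. induction q as [|m q IH]; simpl; [reflexivity|]. rewrite IH, powerRZ_R1. ring. Qed.

Lemma sq_bound q C T : 0 < T -> q ^ 2 <= C * T ^ 2 -> Rabs q <= (1 + Rabs C) * T.
Proof.
  intros HT H0. rewrite <- (pow2_abs q) in H0. pose proof (Rabs_pos q). pose proof (Rle_abs C).
  pose proof (Rabs_pos C).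
  destruct (Rle_dec (Rabs q) ((1 + Rabs C) * T)) as [|Hn]; [assumption|exfalso].
  apply Rnot_le_lt in Hn.
  set (a := Rabs q) in *. set (k := 1 + Rabs C) in *.
  assert (Hk : 1 <= k) by (unfold k; lra).
  assert (Hq1 : 0 < k * T) by nra.
  assert (Hx2 : (k * T) ^ 2 < a ^ 2) by nra.
  assert (Hx3 : C * T ^ 2 <= k * T ^ 2) by (apply Rmult_le_compat_r; [nra|unfold k; lra]).
  assert (Hx4 : k * T ^ 2 <= (k * T) ^ 2) by nra.
  lra.
Qed.

Lemma prune w1 w2 w3 B (ss : list (list mono)) :
  (forall y1 y2 y3, exists C, forall t, 1 <= t ->
     sos_eval ss (y1 * powerRZ t w1) (y2 * powerRZ t w2) (y3 * powerRZ t w3) <= C * powerRZ t (2 * B)) ->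
  forall p, In p ss -> forall y1 y2 y3,
    peval p y1 y2 y3 = peval (filter (fun m => (phiw w1 w2 w3 m <=? B)%Z) p) y1 y2 y3.
Proof.
  intros Hb p Hp y1 y2 y3.
  destruct (Hb y1 y2 y3) as [C HC].
  set (f := fun m => (phiw w1 w2 w3 m <=? B)%Z).
  set (hl := map (fun m => (mono_eval m y1 y2 y3, phiw w1 w2 w3 m)) (filter (fun m => negb (f m)) p)).
  set (ll := map (fun m => (mono_eval m y1 y2 y3, phiw w1 w2 w3 m)) (filter f p)).
  assert (Hz : forall t, 1 <= t -> gv hl t = 0).
  { apply (gp_zero (length hl) hl B (1 + Rabs C + gA ll) eq_refl).
    - intros q Hq. unfold hl in Hq. apply in_map_iff in Hq as [m [<- Hm]].
      apply filter_In in Hm as [_ Hm]. unfold f in Hm. simpl.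
      apply Bool.negb_true_iff, Z.leb_gt in Hm. exact Hm.
    - intros t Ht.
      pose proof (HC t Ht) as H1.
      pose proof (sos_eval_le p ss (y1 * powerRZ t w1) (y2 * powerRZ t w2) (y3 * powerRZ t w3) Hp) as H2.
      rewrite peval_scale in H2 by lra.
      assert (HT : 0 < powerRZ t B) by (apply powerRZ_lt; lra).
      assert (H3 : powerRZ t (2 * B) = powerRZ t B ^ 2).
      { replace (2 * B)%Z with (B + B)%Z by lia. rewrite powerRZ_add by lra. ring. }
      rewrite H3 in H1.
      pose proof (sq_bound _ C _ HT (Rle_trans _ _ _ H2 H1)) as H4.
      rewrite (pevalw_split f) in H4.
      rewrite !pevalw_gv in H4. fold hl ll in H4.
      assert (H5 : Rabs (gv ll t) <= gA ll * powerRZ t B).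
      { apply gv_bound; [exact Ht|]. intros q Hq. unfold ll in Hq.
        apply in_map_iff in Hq as [m [<- Hm]]. apply filter_In in Hm as [_ Hm].
        unfold f in Hm. apply Z.leb_le in Hm. exact Hm. }
      pose proof (Rabs_triang (gv ll t + gv hl t) (- gv ll t)) as H6.
      replace (gv ll t + gv hl t + - gv ll t) with (gv hl t) in H6 by ring.
      rewrite Rabs_Ropp in H6. nra. }
  rewrite (peval_w1 p y1 y2 y3 w1 w2 w3), (peval_w1 (filter f p) y1 y2 y3 w1 w2 w3).
  rewrite (pevalw_split f p). rewrite (pevalw_gv (filter (fun m => negb (f m)) p)).
  fold hl. rewrite (Hz 1 (Rle_refl 1)). ring.
Qed.

Lemma sos_eval_map_eq (g : list mono -> list mono) ss :
  (forall p, In p ss -> forall y1 y2 y3, peval p y1 y2 y3 = peval (g p) y1 y2 y3) ->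
  forall x1 x2 x3, sos_eval (map g ss) x1 x2 x3 = sos_eval ss x1 x2 x3.
Proof.
  intros H x1 x2 x3. induction ss as [|p ss IH]; simpl; [reflexivity|].
  rewrite <- (H p (or_introl eq_refl)). rewrite IH; [reflexivity|].
  intros q Hq. apply H. right. exact Hq.
Qed.

Definition fP : list mono :=
  Mono 8 0 0 0 :: Mono (/2) 2 4 0 :: Mono 1 2 3 0 :: Mono (-2) 3 3 0 :: Mono 2 1 2 0 ::
  Mono 10 2 2 0 :: Mono 4 3 2 0 :: Mono 3 4 2 0 :: Mono 4 1 1 0 :: Mono (-8) 2 1 0 ::
  Mono 1 2 0 2 :: nil.

Lemma fpoly_peval x1 x2 x3 : fpoly x1 x2 x3 = peval fP x1 x2 x3.
Proof. unfold fpoly, f1, f2, fP, peval, mono_eval. simpl. field. Qed.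

Lemma bound_hyp w1 w2 w3 B (ss : list (list mono)) :
  (forall x1 x2 x3, sos_eval ss x1 x2 x3 = peval fP x1 x2 x3) ->
  forallb (fun m => (phiw w1 w2 w3 m <=? 2 * B)%Z) fP = true ->
  forall y1 y2 y3, exists C, forall t, 1 <= t ->
     sos_eval ss (y1 * powerRZ t w1) (y2 * powerRZ t w2) (y3 * powerRZ t w3) <= C * powerRZ t (2 * B).
Proof.
  intros Hs Hf y1 y2 y3.
  exists (gA (map (fun m => (mono_eval m y1 y2 y3, phiw w1 w2 w3 m)) fP)).
  intros t Ht. rewrite Hs, peval_scale, pevalw_gv by lra.
  eapply Rle_trans; [apply Rle_abs|]. apply gv_bound; [exact Ht|].
  intros q Hq. apply in_map_iff in Hq as [m [<- Hm]]. simpl.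
  rewrite forallb_forall in Hf. apply Z.leb_le. apply Hf. exact Hm.
Qed.

Lemma supp m : (phiw (-2) 1 2 m <= 0)%Z -> (phiw 1 (-2) (-1) m <= 0)%Z -> (phiw 1 1 2 m <= 3)%Z ->
  (e1 m = 0 /\ e2 m = 0 /\ e3 m = 0)%nat \/ (e1 m = 1 /\ e2 m = 1 /\ e3 m = 0)%nat \/
  (e1 m = 1 /\ e2 m = 2 /\ e3 m = 0)%nat \/ (e1 m = 2 /\ e2 m = 1 /\ e3 m = 0)%nat \/
  (e1 m = 1 /\ e2 m = 0 /\ e3 m = 1)%nat.
Proof. unfold phiw. lia. Qed.

Definition goodm (m : mono) : Prop :=
  (phiw (-2) 1 2 m <= 0)%Z /\ (phiw 1 (-2) (-1) m <= 0)%Z /\ (phiw 1 1 2 m <= 3)%Z.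

Lemma form5 p : (forall m, In m p -> goodm m) ->
  exists a b c d e, forall x1 x2 x3,
    peval p x1 x2 x3 = a + b * x1 * x2 + c * x1 * x2 ^ 2 + d * x1 ^ 2 * x2 + e * x1 * x3.
Proof.
  induction p as [|m p IH]; intros H.
  - exists 0, 0, 0, 0, 0. intros. simpl. ring.
  - destruct IH as [a [b [c [d [e He]]]]]. { intros q Hq. apply H. right. exact Hq. }
    destruct (H m (or_introl eq_refl)) as [Ha [Hb Hc]].
    pose proof (supp m Ha Hb Hc) as Hs.
    destruct m as [k i j l]. simpl in Hs.
    destruct Hs as [[-> [-> ->]]|[[-> [-> ->]]|[[-> [-> ->]]|[[-> [-> ->]]|[-> [-> ->]]]]]];
    simpl.
    + exists (k + a), b, c, d, e. intros. rewrite He. unfold mono_eval; simpl. ring.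
    + exists a, (k + b), c, d, e. intros. rewrite He. unfold mono_eval; simpl. ring.
    + exists a, b, (k + c), d, e. intros. rewrite He. unfold mono_eval; simpl. ring.
    + exists a, b, c, (k + d), e. intros. rewrite He. unfold mono_eval; simpl. ring.
    + exists a, b, c, d, (k + e). intros. rewrite He. unfold mono_eval; simpl. ring.
Qed.

Definition Lf (g : R -> R -> R -> R) : R :=
  (-35) * g 1 1 0 + (-493/2) * g 1 (-1) 0 + (-147/2) * g 1 2 0 + (1106/15) * g 1 (-2) 0
  + (651/10) * g 1 3 0 + (1442/3) * g (-1) 1 0 + (112/3) * g (-1) (-1) 0
  + (-1427/6) * g (-1) 2 0 + (-211/6) * g 2 1 0 + (553/6) * g (-2) 1 0.

Lemma Lf_f : Lf fpoly = -672.
Proof. unfold Lf, fpoly, f1, f2. field. Qed.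

Lemma Lf_sos ss : (forall p, In p ss -> forall m, In m p -> goodm m) -> 0 <= Lf (sos_eval ss).
Proof.
  induction ss as [|p ss IH]; intros H.
  - unfold Lf. simpl. lra.
  - destruct (form5 p (H p (or_introl eq_refl))) as [a [b [c [d [e He]]]]].
    assert (IH' := IH (fun q Hq => H q (or_intror Hq))).
    assert (E : Lf (sos_eval (p :: ss)) =
              ((-11) * a + 10 * b - 44 * c - 28 * d) ^ 2 + Lf (sos_eval ss)).
    { unfold Lf. simpl sos_eval. rewrite !He. field. }
    rewrite E. pose proof (pow2_ge_0 ((-11) * a + 10 * b - 44 * c - 28 * d)). lra.
Qed.

Lemma part2 : ~ (exists sigma1 sigma2 : R -> R -> R -> R,
        SOS I1 sigma1 /\ SOS I2 sigma2 /\
        forall x1 x2 x3, fpoly x1 x2 x3 = sigma1 x1 x2 x3 + sigma2 x1 x2 x3).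
Proof.
  intros [s1 [s2 [[t1 [l1 [_ H1]]] [[t2 [l2 [_ H2]]] Hf]]]].
  set (ss := l1 ++ l2).
  assert (H0 : forall x1 x2 x3, sos_eval ss x1 x2 x3 = peval fP x1 x2 x3).
  { intros. unfold ss. rewrite sos_eval_app, <- H1, <- H2, <- Hf, fpoly_peval. reflexivity. }
  set (g1 := filter (fun m => (phiw (-2) 1 2 m <=? 0)%Z)).
  assert (E1 : forall x1 x2 x3, sos_eval (map g1 ss) x1 x2 x3 = sos_eval ss x1 x2 x3).
  { apply sos_eval_map_eq. apply (prune (-2) 1 2 0). apply bound_hyp. exact H0. reflexivity. }
  set (ss1 := map g1 ss).
  assert (H01 : forall x1 x2 x3, sos_eval ss1 x1 x2 x3 = peval fP x1 x2 x3).
  { intros. unfold ss1. rewrite E1. apply H0. }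
  set (g2 := filter (fun m => (phiw 1 (-2) (-1) m <=? 0)%Z)).
  assert (E2 : forall x1 x2 x3, sos_eval (map g2 ss1) x1 x2 x3 = sos_eval ss1 x1 x2 x3).
  { apply sos_eval_map_eq. apply (prune 1 (-2) (-1) 0). apply bound_hyp. exact H01. reflexivity. }
  set (ss2 := map g2 ss1).
  assert (H02 : forall x1 x2 x3, sos_eval ss2 x1 x2 x3 = peval fP x1 x2 x3).
  { intros. unfold ss2. rewrite E2. apply H01. }
  set (g3 := filter (fun m => (phiw 1 1 2 m <=? 3)%Z)).
  assert (E3 : forall x1 x2 x3, sos_eval (map g3 ss2) x1 x2 x3 = sos_eval ss2 x1 x2 x3).
  { apply sos_eval_map_eq. apply (prune 1 1 2 3). apply bound_hyp. exact H02. reflexivity. }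
  set (ss3 := map g3 ss2).
  assert (Hg : forall p, In p ss3 -> forall m, In m p -> goodm m).
  { intros p Hp m Hm. unfold ss3, ss2, ss1 in Hp.
    apply in_map_iff in Hp as [p2 [<- Hp2]].
    apply in_map_iff in Hp2 as [p1 [<- Hp1]].
    apply in_map_iff in Hp1 as [p0 [<- _]].
    unfold g3, g2, g1 in Hm.
    apply filter_In in Hm as [Hm Hc3]. apply filter_In in Hm as [Hm Hc2].
    apply filter_In in Hm as [_ Hc1].
    apply Z.leb_le in Hc1, Hc2, Hc3. split; [|split]; assumption. }
  pose proof (Lf_sos ss3 Hg) as HL.
  assert (HE : Lf (sos_eval ss3) = Lf fpoly).
  { unfold Lf. unfold ss3. rewrite !E3, !H02, <- !fpoly_peval. reflexivity. }
  rewrite HE, Lf_f in HL. lra.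
Qed.

Fixpoint linv (cs : list R) (vs : list R) : R :=
  match cs, vs with c :: cs', v :: vs' => c * v + linv cs' vs' | _, _ => 0 end.
Definition sumA (cert : list (positive * list Z)) (vs : list R) : R :=
  fold_right (fun nc acc => IZR (Zpos (fst nc)) * (linv (map IZR (snd nc)) vs)^2 + acc) 0 cert.
Definition basis1 : list (nat*nat) := (0,0)%nat :: (0,1)%nat :: (0,2)%nat :: (1,0)%nat :: (1,1)%nat :: (1,2)%nat :: (1,3)%nat :: (1,4)%nat :: (2,0)%nat :: (2,1)%nat :: (2,2)%nat :: (2,3)%nat :: (2,4)%nat :: (3,0)%nat :: (3,1)%nat :: (3,2)%nat :: (3,3)%nat :: (3,4)%nat :: (4,0)%nat :: (4,1)%nat :: (4,2)%nat :: (4,3)%nat :: (5,1)%nat :: (5,2)%nat :: (6,1)%nat :: nil.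
Definition cert1 : list (positive * list Z) := 
  (8372879%positive, (1048576 :: 0 :: (-336503) :: 0 :: 352918 :: 41037 :: (-73866) :: (-41037) :: (-2027225) :: (-385747) :: 344710 :: (-8207) :: 8207 :: (-24622) :: (-558102) :: 32830 :: 8207 :: 16415 :: 196977 :: 935642 :: 90281 :: 8207 :: 49244 :: 32830 :: (-98489) :: nil)%Z) ::
  (22135439%positive, (0 :: 1048576 :: 0 :: (-34150) :: 15523 :: 310450 :: 121076 :: 3105 :: (-34150) :: (-2918230) :: 183166 :: (-43463) :: (-3105) :: 27941 :: (-481198) :: (-338391) :: (-90031) :: 0 :: (-3105) :: 928246 :: 3105 :: (-15523) :: 189375 :: 12418 :: (-6209) :: nil)%Z) ::
  (7510591%positive, (0 :: 0 :: 1048576 :: 54898 :: (-120782) :: (-3618) :: 257214 :: 131714 :: (-84779) :: 658018 :: (-3088214) :: (-304876) :: (-15363) :: 36940 :: 138872 :: (-784277) :: (-161758) :: (-49026) :: 61321 :: (-131900) :: 810021 :: 121882 :: (-55580) :: 112391 :: (-26085) :: nil)%Z) ::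
  (65869423%positive, (0 :: 0 :: 0 :: 1048576 :: (-5369) :: (-612109) :: 31088 :: 12810 :: 3262 :: 295893 :: (-132920) :: (-39343) :: 1101 :: (-614400) :: (-454701) :: 209632 :: (-39664) :: (-5967) :: (-1443) :: (-151803) :: 1458 :: 6405 :: 294519 :: 20330 :: (-1999) :: nil)%Z) ::
  (245607081%positive, (0 :: 0 :: 0 :: 0 :: 1048576 :: (-84278) :: (-130988) :: (-1010) :: (-13642) :: 133034 :: 202700 :: (-29795) :: 417 :: (-6904) :: (-1040920) :: 131062 :: 53682 :: 190 :: 4953 :: (-184441) :: (-91356) :: 4841 :: 98718 :: (-6964) :: 15313 :: nil)%Z) ::
  (120405741%positive, (0 :: 0 :: 0 :: 0 :: 0 :: 1048576 :: (-21876) :: (-22357) :: (-20662) :: (-23302) :: 289690 :: 137259 :: 7412 :: (-45259) :: 80568 :: (-1001199) :: (-37832) :: 6061 :: 3992 :: 2877 :: (-192250) :: (-34551) :: 32439 :: 50839 :: 2473 :: nil)%Z) ::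
  (13078482%positive, (0 :: 0 :: 0 :: 0 :: 0 :: 0 :: 1048576 :: 12446 :: 58874 :: (-180111) :: (-274249) :: 554615 :: 5378 :: (-7974) :: (-785471) :: (-321288) :: (-438914) :: (-361) :: (-33836) :: (-356698) :: 341989 :: (-115089) :: 119590 :: 62937 :: 52907 :: nil)%Z) ::
  (310397%positive, (0 :: 0 :: 0 :: 0 :: 0 :: 0 :: 0 :: 1048576 :: (-1208836) :: 1204277 :: 2781163 :: (-1677974) :: 112092 :: (-33887) :: 1198942 :: (-2974312) :: (-94491) :: (-431918) :: 522468 :: 319426 :: (-1545157) :: 728725 :: (-298864) :: 242814 :: (-233923) :: nil)%Z) ::
  (92461025%positive, (0 :: 0 :: 0 :: 0 :: 0 :: 0 :: 0 :: 0 :: 1048576 :: (-14099) :: (-735001) :: 72631 :: 21972 :: (-3213) :: 295869 :: (-119584) :: (-57923) :: 3288 :: (-142429) :: (-487244) :: 48954 :: (-9004) :: (-26687) :: (-12769) :: 70996 :: nil)%Z) ::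
  (440508471%positive, (0 :: 0 :: 0 :: 0 :: 0 :: 0 :: 0 :: 0 :: 0 :: 1048576 :: (-184067) :: (-150973) :: (-1805) :: (-8920) :: 146589 :: 170127 :: (-23125) :: 647 :: (-2847) :: (-401578) :: 65817 :: 11874 :: (-73539) :: (-18548) :: 7290 :: nil)%Z) ::
  (241820269%positive, (0 :: 0 :: 0 :: 0 :: 0 :: 0 :: 0 :: 0 :: 0 :: 0 :: 1048576 :: (-30882) :: (-24219) :: (-1912) :: (-26832) :: 237894 :: 103357 :: 4194 :: (-19319) :: (-18915) :: (-331047) :: (-14679) :: (-12227) :: (-41732) :: 11218 :: nil)%Z) ::
  (33704848%positive, (0 :: 0 :: 0 :: 0 :: 0 :: 0 :: 0 :: 0 :: 0 :: 0 :: 0 :: 1048576 :: 26313 :: 17396 :: 192848 :: (-528613) :: 241878 :: (-994) :: 29475 :: (-392940) :: (-144728) :: (-35783) :: (-162831) :: 92356 :: (-13930) :: nil)%Z) ::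
  (1221596%positive, (0 :: 0 :: 0 :: 0 :: 0 :: 0 :: 0 :: 0 :: 0 :: 0 :: 0 :: 0 :: 1048576 :: (-846914) :: 964410 :: 1756949 :: (-2005165) :: 17604 :: 151005 :: 560337 :: (-1442551) :: (-1135) :: 629211 :: (-339300) :: (-100181) :: nil)%Z) ::
  (41538254%positive, (0 :: 0 :: 0 :: 0 :: 0 :: 0 :: 0 :: 0 :: 0 :: 0 :: 0 :: 0 :: 0 :: 1048576 :: (-15586) :: (-602087) :: 99760 :: 19224 :: 1739 :: 285512 :: (-60145) :: (-20652) :: (-500928) :: (-31722) :: 2939 :: nil)%Z) ::
  (263970189%positive, (0 :: 0 :: 0 :: 0 :: 0 :: 0 :: 0 :: 0 :: 0 :: 0 :: 0 :: 0 :: 0 :: 0 :: 1048576 :: (-272604) :: (-101157) :: (-1339) :: (-7520) :: 200564 :: 102156 :: (-12936) :: (-135967) :: 19420 :: (-23577) :: nil)%Z) ::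
  (149576741%positive, (0 :: 0 :: 0 :: 0 :: 0 :: 0 :: 0 :: 0 :: 0 :: 0 :: 0 :: 0 :: 0 :: 0 :: 0 :: 1048576 :: 16399 :: (-12119) :: (-544) :: (-15501) :: 222325 :: 54598 :: (-41195) :: (-73336) :: (-8850) :: nil)%Z) ::
  (16065835%positive, (0 :: 0 :: 0 :: 0 :: 0 :: 0 :: 0 :: 0 :: 0 :: 0 :: 0 :: 0 :: 0 :: 0 :: 0 :: 0 :: 1048576 :: 23475 :: 56521 :: 296023 :: (-942132) :: 177745 :: (-146191) :: (-85620) :: (-94675) :: nil)%Z) ::
  (383514%positive, (0 :: 0 :: 0 :: 0 :: 0 :: 0 :: 0 :: 0 :: 0 :: 0 :: 0 :: 0 :: 0 :: 0 :: 0 :: 0 :: 0 :: 1048576 :: (-1192818) :: 1221454 :: 963257 :: (-2306616) :: 575736 :: (-810452) :: 759510 :: nil)%Z) ::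
  (5553594%positive, (0 :: 0 :: 0 :: 0 :: 0 :: 0 :: 0 :: 0 :: 0 :: 0 :: 0 :: 0 :: 0 :: 0 :: 0 :: 0 :: 0 :: 0 :: 1048576 :: (-21512) :: (-215365) :: 34359 :: 299606 :: 134111 :: (-512042) :: nil)%Z) ::
  (68640926%positive, (0 :: 0 :: 0 :: 0 :: 0 :: 0 :: 0 :: 0 :: 0 :: 0 :: 0 :: 0 :: 0 :: 0 :: 0 :: 0 :: 0 :: 0 :: 0 :: 1048576 :: (-270081) :: (-44192) :: 242608 :: 33177 :: (-16411) :: nil)%Z) ::
  (36796336%positive, (0 :: 0 :: 0 :: 0 :: 0 :: 0 :: 0 :: 0 :: 0 :: 0 :: 0 :: 0 :: 0 :: 0 :: 0 :: 0 :: 0 :: 0 :: 0 :: 0 :: 1048576 :: 71626 :: (-13719) :: 136827 :: (-18396) :: nil)%Z) ::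
  (1052443%positive, (0 :: 0 :: 0 :: 0 :: 0 :: 0 :: 0 :: 0 :: 0 :: 0 :: 0 :: 0 :: 0 :: 0 :: 0 :: 0 :: 0 :: 0 :: 0 :: 0 :: 0 :: 1048576 :: 671033 :: (-2344072) :: 70542 :: nil)%Z) ::
  (7681903%positive, (0 :: 0 :: 0 :: 0 :: 0 :: 0 :: 0 :: 0 :: 0 :: 0 :: 0 :: 0 :: 0 :: 0 :: 0 :: 0 :: 0 :: 0 :: 0 :: 0 :: 0 :: 0 :: 1048576 :: 619 :: 272692 :: nil)%Z) ::
  (251242%positive, (0 :: 0 :: 0 :: 0 :: 0 :: 0 :: 0 :: 0 :: 0 :: 0 :: 0 :: 0 :: 0 :: 0 :: 0 :: 0 :: 0 :: 0 :: 0 :: 0 :: 0 :: 0 :: 0 :: 1048576 :: (-145373) :: nil)%Z) ::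
  (100567%positive, (0 :: 0 :: 0 :: 0 :: 0 :: 0 :: 0 :: 0 :: 0 :: 0 :: 0 :: 0 :: 0 :: 0 :: 0 :: 0 :: 0 :: 0 :: 0 :: 0 :: 0 :: 0 :: 0 :: 0 :: 1048576 :: nil)%Z) ::
  (373252161536%positive, (1 :: 0 :: 1 :: 0 :: 0 :: 0 :: 0 :: 0 :: 0 :: 0 :: 0 :: 0 :: 0 :: 0 :: 0 :: 0 :: 0 :: 0 :: 0 :: 0 :: 0 :: 0 :: 0 :: 0 :: 0 :: nil)%Z) ::
  (2318688845824%positive, (1 :: 0 :: 0 :: 0 :: (-1) :: 0 :: 0 :: 0 :: 0 :: 0 :: 0 :: 0 :: 0 :: 0 :: 0 :: 0 :: 0 :: 0 :: 0 :: 0 :: 0 :: 0 :: 0 :: 0 :: 0 :: nil)%Z) ::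
  (473791725568%positive, (1 :: 0 :: 0 :: 0 :: 0 :: (-1) :: 0 :: 0 :: 0 :: 0 :: 0 :: 0 :: 0 :: 0 :: 0 :: 0 :: 0 :: 0 :: 0 :: 0 :: 0 :: 0 :: 0 :: 0 :: 0 :: nil)%Z) ::
  (4414934876160%positive, (1 :: 0 :: 0 :: 0 :: 0 :: 0 :: (-1) :: 0 :: 0 :: 0 :: 0 :: 0 :: 0 :: 0 :: 0 :: 0 :: 0 :: 0 :: 0 :: 0 :: 0 :: 0 :: 0 :: 0 :: 0 :: nil)%Z) ::
  (473791725568%positive, (1 :: 0 :: 0 :: 0 :: 0 :: 0 :: 0 :: 1 :: 0 :: 0 :: 0 :: 0 :: 0 :: 0 :: 0 :: 0 :: 0 :: 0 :: 0 :: 0 :: 0 :: 0 :: 0 :: 0 :: 0 :: nil)%Z) ::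
  (1177568673792%positive, (1 :: 0 :: 0 :: 0 :: 0 :: 0 :: 0 :: 0 :: (-1) :: 0 :: 0 :: 0 :: 0 :: 0 :: 0 :: 0 :: 0 :: 0 :: 0 :: 0 :: 0 :: 0 :: 0 :: 0 :: 0 :: nil)%Z) ::
  (2570037755904%positive, (1 :: 0 :: 0 :: 0 :: 0 :: 0 :: 0 :: 0 :: 0 :: (-1) :: 0 :: 0 :: 0 :: 0 :: 0 :: 0 :: 0 :: 0 :: 0 :: 0 :: 0 :: 0 :: 0 :: 0 :: 0 :: nil)%Z) ::
  (3043829481472%positive, (1 :: 0 :: 0 :: 0 :: 0 :: 0 :: 0 :: 0 :: 0 :: 0 :: 1 :: 0 :: 0 :: 0 :: 0 :: 0 :: 0 :: 0 :: 0 :: 0 :: 0 :: 0 :: 0 :: 0 :: 0 :: nil)%Z) ::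
  (3417081643008%positive, (1 :: 0 :: 0 :: 0 :: 0 :: 0 :: 0 :: 0 :: 0 :: 0 :: 0 :: (-1) :: 0 :: 0 :: 0 :: 0 :: 0 :: 0 :: 0 :: 0 :: 0 :: 0 :: 0 :: 0 :: 0 :: nil)%Z) ::
  (3417081643008%positive, (1 :: 0 :: 0 :: 0 :: 0 :: 0 :: 0 :: 0 :: 0 :: 0 :: 0 :: 0 :: 1 :: 0 :: 0 :: 0 :: 0 :: 0 :: 0 :: 0 :: 0 :: 0 :: 0 :: 0 :: 0 :: nil)%Z) ::
  (1471644958720%positive, (1 :: 0 :: 0 :: 0 :: 0 :: 0 :: 0 :: 0 :: 0 :: 0 :: 0 :: 0 :: 0 :: (-1) :: 0 :: 0 :: 0 :: 0 :: 0 :: 0 :: 0 :: 0 :: 0 :: 0 :: 0 :: nil)%Z) ::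
  (4091952496640%positive, (1 :: 0 :: 0 :: 0 :: 0 :: 0 :: 0 :: 0 :: 0 :: 0 :: 0 :: 0 :: 0 :: 0 :: (-1) :: 0 :: 0 :: 0 :: 0 :: 0 :: 0 :: 0 :: 0 :: 0 :: 0 :: nil)%Z) ::
  (3890873368576%positive, (1 :: 0 :: 0 :: 0 :: 0 :: 0 :: 0 :: 0 :: 0 :: 0 :: 0 :: 0 :: 0 :: 0 :: 0 :: (-1) :: 0 :: 0 :: 0 :: 0 :: 0 :: 0 :: 0 :: 0 :: 0 :: nil)%Z) ::
  (3417081643008%positive, (1 :: 0 :: 0 :: 0 :: 0 :: 0 :: 0 :: 0 :: 0 :: 0 :: 0 :: 0 :: 0 :: 0 :: 0 :: 0 :: 1 :: 0 :: 0 :: 0 :: 0 :: 0 :: 0 :: 0 :: 0 :: nil)%Z) ::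
  (1945436684288%positive, (1 :: 0 :: 0 :: 0 :: 0 :: 0 :: 0 :: 0 :: 0 :: 0 :: 0 :: 0 :: 0 :: 0 :: 0 :: 0 :: 0 :: (-1) :: 0 :: 0 :: 0 :: 0 :: 0 :: 0 :: 0 :: nil)%Z) ::
  (2993559699456%positive, (1 :: 0 :: 0 :: 0 :: 0 :: 0 :: 0 :: 0 :: 0 :: 0 :: 0 :: 0 :: 0 :: 0 :: 0 :: 0 :: 0 :: 0 :: 1 :: 0 :: 0 :: 0 :: 0 :: 0 :: 0 :: nil)%Z) ::
  (3244908609536%positive, (1 :: 0 :: 0 :: 0 :: 0 :: 0 :: 0 :: 0 :: 0 :: 0 :: 0 :: 0 :: 0 :: 0 :: 0 :: 0 :: 0 :: 0 :: 0 :: 1 :: 0 :: 0 :: 0 :: 0 :: 0 :: nil)%Z) ::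
  (2469498191872%positive, (1 :: 0 :: 0 :: 0 :: 0 :: 0 :: 0 :: 0 :: 0 :: 0 :: 0 :: 0 :: 0 :: 0 :: 0 :: 0 :: 0 :: 0 :: 0 :: 0 :: 1 :: 0 :: 0 :: 0 :: 0 :: nil)%Z) ::
  (3417081643008%positive, (1 :: 0 :: 0 :: 0 :: 0 :: 0 :: 0 :: 0 :: 0 :: 0 :: 0 :: 0 :: 0 :: 0 :: 0 :: 0 :: 0 :: 0 :: 0 :: 0 :: 0 :: 1 :: 0 :: 0 :: 0 :: nil)%Z) ::
  (2943289917440%positive, (1 :: 0 :: 0 :: 0 :: 0 :: 0 :: 0 :: 0 :: 0 :: 0 :: 0 :: 0 :: 0 :: 0 :: 0 :: 0 :: 0 :: 0 :: 0 :: 0 :: 0 :: 0 :: 1 :: 0 :: 0 :: nil)%Z) ::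
  (3890873368576%positive, (1 :: 0 :: 0 :: 0 :: 0 :: 0 :: 0 :: 0 :: 0 :: 0 :: 0 :: 0 :: 0 :: 0 :: 0 :: 0 :: 0 :: 0 :: 0 :: 0 :: 0 :: 0 :: 0 :: (-1) :: 0 :: nil)%Z) ::
  (2893020135424%positive, (1 :: 0 :: 0 :: 0 :: 0 :: 0 :: 0 :: 0 :: 0 :: 0 :: 0 :: 0 :: 0 :: 0 :: 0 :: 0 :: 0 :: 0 :: 0 :: 0 :: 0 :: 0 :: 0 :: 0 :: 1 :: nil)%Z) ::
  (17235869114040320%positive, (1 :: 0 :: 0 :: 0 :: 0 :: 0 :: 0 :: 0 :: 0 :: 0 :: 0 :: 0 :: 0 :: 0 :: 0 :: 0 :: 0 :: 0 :: 0 :: 0 :: 0 :: 0 :: 0 :: 0 :: 0 :: nil)%Z) ::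
  (11531980898304%positive, (0 :: 1 :: 0 :: 1 :: 0 :: 0 :: 0 :: 0 :: 0 :: 0 :: 0 :: 0 :: 0 :: 0 :: 0 :: 0 :: 0 :: 0 :: 0 :: 0 :: 0 :: 0 :: 0 :: 0 :: 0 :: nil)%Z) ::
  (11571997704192%positive, (0 :: 1 :: 0 :: 0 :: (-1) :: 0 :: 0 :: 0 :: 0 :: 0 :: 0 :: 0 :: 0 :: 0 :: 0 :: 0 :: 0 :: 0 :: 0 :: 0 :: 0 :: 0 :: 0 :: 0 :: 0 :: nil)%Z) ::
  (666946764800%positive, (0 :: 1 :: 0 :: 0 :: 0 :: 1 :: 0 :: 0 :: 0 :: 0 :: 0 :: 0 :: 0 :: 0 :: 0 :: 0 :: 0 :: 0 :: 0 :: 0 :: 0 :: 0 :: 0 :: 0 :: 0 :: nil)%Z) ::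
  (11345235804160%positive, (0 :: 1 :: 0 :: 0 :: 0 :: 0 :: (-1) :: 0 :: 0 :: 0 :: 0 :: 0 :: 0 :: 0 :: 0 :: 0 :: 0 :: 0 :: 0 :: 0 :: 0 :: 0 :: 0 :: 0 :: 0 :: nil)%Z) ::
  (11598675574784%positive, (0 :: 1 :: 0 :: 0 :: 0 :: 0 :: 0 :: (-1) :: 0 :: 0 :: 0 :: 0 :: 0 :: 0 :: 0 :: 0 :: 0 :: 0 :: 0 :: 0 :: 0 :: 0 :: 0 :: 0 :: 0 :: nil)%Z) ::
  (11531980898304%positive, (0 :: 1 :: 0 :: 0 :: 0 :: 0 :: 0 :: 0 :: 1 :: 0 :: 0 :: 0 :: 0 :: 0 :: 0 :: 0 :: 0 :: 0 :: 0 :: 0 :: 0 :: 0 :: 0 :: 0 :: 0 :: nil)%Z) ::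
  (6269299589120%positive, (0 :: 1 :: 0 :: 0 :: 0 :: 0 :: 0 :: 0 :: 0 :: (-1) :: 0 :: 0 :: 0 :: 0 :: 0 :: 0 :: 0 :: 0 :: 0 :: 0 :: 0 :: 0 :: 0 :: 0 :: 0 :: nil)%Z) ::
  (11211846451200%positive, (0 :: 1 :: 0 :: 0 :: 0 :: 0 :: 0 :: 0 :: 0 :: 0 :: (-1) :: 0 :: 0 :: 0 :: 0 :: 0 :: 0 :: 0 :: 0 :: 0 :: 0 :: 0 :: 0 :: 0 :: 0 :: nil)%Z) ::
  (93372547072%positive, (0 :: 1 :: 0 :: 0 :: 0 :: 0 :: 0 :: 0 :: 0 :: 0 :: 0 :: (-1) :: 0 :: 0 :: 0 :: 0 :: 0 :: 0 :: 0 :: 0 :: 0 :: 0 :: 0 :: 0 :: 0 :: nil)%Z) ::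
  (11598675574784%positive, (0 :: 1 :: 0 :: 0 :: 0 :: 0 :: 0 :: 0 :: 0 :: 0 :: 0 :: 0 :: 1 :: 0 :: 0 :: 0 :: 0 :: 0 :: 0 :: 0 :: 0 :: 0 :: 0 :: 0 :: 0 :: nil)%Z) ::
  (11545319833600%positive, (0 :: 1 :: 0 :: 0 :: 0 :: 0 :: 0 :: 0 :: 0 :: 0 :: 0 :: 0 :: 0 :: (-1) :: 0 :: 0 :: 0 :: 0 :: 0 :: 0 :: 0 :: 0 :: 0 :: 0 :: 0 :: nil)%Z) ::
  (10571577556992%positive, (0 :: 1 :: 0 :: 0 :: 0 :: 0 :: 0 :: 0 :: 0 :: 0 :: 0 :: 0 :: 0 :: 0 :: 1 :: 0 :: 0 :: 0 :: 0 :: 0 :: 0 :: 0 :: 0 :: 0 :: 0 :: nil)%Z) ::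
  (10878373068800%positive, (0 :: 1 :: 0 :: 0 :: 0 :: 0 :: 0 :: 0 :: 0 :: 0 :: 0 :: 0 :: 0 :: 0 :: 0 :: 1 :: 0 :: 0 :: 0 :: 0 :: 0 :: 0 :: 0 :: 0 :: 0 :: nil)%Z) ::
  (11411930480640%positive, (0 :: 1 :: 0 :: 0 :: 0 :: 0 :: 0 :: 0 :: 0 :: 0 :: 0 :: 0 :: 0 :: 0 :: 0 :: 0 :: 1 :: 0 :: 0 :: 0 :: 0 :: 0 :: 0 :: 0 :: 0 :: nil)%Z) ::
  (11598675574784%positive, (0 :: 1 :: 0 :: 0 :: 0 :: 0 :: 0 :: 0 :: 0 :: 0 :: 0 :: 0 :: 0 :: 0 :: 0 :: 0 :: 0 :: 0 :: 1 :: 0 :: 0 :: 0 :: 0 :: 0 :: 0 :: nil)%Z) ::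
  (9611174215680%positive, (0 :: 1 :: 0 :: 0 :: 0 :: 0 :: 0 :: 0 :: 0 :: 0 :: 0 :: 0 :: 0 :: 0 :: 0 :: 0 :: 0 :: 0 :: 0 :: (-1) :: 0 :: 0 :: 0 :: 0 :: 0 :: nil)%Z) ::
  (11598675574784%positive, (0 :: 1 :: 0 :: 0 :: 0 :: 0 :: 0 :: 0 :: 0 :: 0 :: 0 :: 0 :: 0 :: 0 :: 0 :: 0 :: 0 :: 0 :: 0 :: 0 :: (-1) :: 0 :: 0 :: 0 :: 0 :: nil)%Z) ::
  (11571997704192%positive, (0 :: 1 :: 0 :: 0 :: 0 :: 0 :: 0 :: 0 :: 0 :: 0 :: 0 :: 0 :: 0 :: 0 :: 0 :: 0 :: 0 :: 0 :: 0 :: 0 :: 0 :: 1 :: 0 :: 0 :: 0 :: nil)%Z) ::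
  (11198507515904%positive, (0 :: 1 :: 0 :: 0 :: 0 :: 0 :: 0 :: 0 :: 0 :: 0 :: 0 :: 0 :: 0 :: 0 :: 0 :: 0 :: 0 :: 0 :: 0 :: 0 :: 0 :: 0 :: (-1) :: 0 :: 0 :: nil)%Z) ::
  (26677870592%positive, (0 :: 1 :: 0 :: 0 :: 0 :: 0 :: 0 :: 0 :: 0 :: 0 :: 0 :: 0 :: 0 :: 0 :: 0 :: 0 :: 0 :: 0 :: 0 :: 0 :: 0 :: 0 :: 0 :: 1 :: 0 :: nil)%Z) ::
  (13338935296%positive, (0 :: 1 :: 0 :: 0 :: 0 :: 0 :: 0 :: 0 :: 0 :: 0 :: 0 :: 0 :: 0 :: 0 :: 0 :: 0 :: 0 :: 0 :: 0 :: 0 :: 0 :: 0 :: 0 :: 0 :: (-1) :: nil)%Z) ::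
  (17106772133150720%positive, (0 :: 1 :: 0 :: 0 :: 0 :: 0 :: 0 :: 0 :: 0 :: 0 :: 0 :: 0 :: 0 :: 0 :: 0 :: 0 :: 0 :: 0 :: 0 :: 0 :: 0 :: 0 :: 0 :: 0 :: 0 :: nil)%Z) ::
  (456862466048%positive, (0 :: 0 :: 1 :: 1 :: 0 :: 0 :: 0 :: 0 :: 0 :: 0 :: 0 :: 0 :: 0 :: 0 :: 0 :: 0 :: 0 :: 0 :: 0 :: 0 :: 0 :: 0 :: 0 :: 0 :: 0 :: nil)%Z) ::
  (677446552806%positive, (0 :: 0 :: 1 :: 0 :: 1 :: 0 :: 0 :: 0 :: 0 :: 0 :: 0 :: 0 :: 0 :: 0 :: 0 :: 0 :: 0 :: 0 :: 0 :: 0 :: 0 :: 0 :: 0 :: 0 :: 0 :: nil)%Z) ::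
  (196284130715%positive, (0 :: 0 :: 1 :: 0 :: 0 :: (-1) :: 0 :: 0 :: 0 :: 0 :: 0 :: 0 :: 0 :: 0 :: 0 :: 0 :: 0 :: 0 :: 0 :: 0 :: 0 :: 0 :: 0 :: 0 :: 0 :: nil)%Z) ::
  (1645162638650%positive, (0 :: 0 :: 1 :: 0 :: 0 :: 0 :: (-1) :: 0 :: 0 :: 0 :: 0 :: 0 :: 0 :: 0 :: 0 :: 0 :: 0 :: 0 :: 0 :: 0 :: 0 :: 0 :: 0 :: 0 :: 0 :: nil)%Z) ::
  (3987987094117%positive, (0 :: 0 :: 1 :: 0 :: 0 :: 0 :: 0 :: (-1) :: 0 :: 0 :: 0 :: 0 :: 0 :: 0 :: 0 :: 0 :: 0 :: 0 :: 0 :: 0 :: 0 :: 0 :: 0 :: 0 :: 0 :: nil)%Z) ::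
  (1933442884241%positive, (0 :: 0 :: 1 :: 0 :: 0 :: 0 :: 0 :: 0 :: (-1) :: 0 :: 0 :: 0 :: 0 :: 0 :: 0 :: 0 :: 0 :: 0 :: 0 :: 0 :: 0 :: 0 :: 0 :: 0 :: 0 :: nil)%Z) ::
  (2783579070395%positive, (0 :: 0 :: 1 :: 0 :: 0 :: 0 :: 0 :: 0 :: 0 :: (-1) :: 0 :: 0 :: 0 :: 0 :: 0 :: 0 :: 0 :: 0 :: 0 :: 0 :: 0 :: 0 :: 0 :: 0 :: 0 :: nil)%Z) ::
  (3726761788758%positive, (0 :: 0 :: 1 :: 0 :: 0 :: 0 :: 0 :: 0 :: 0 :: 0 :: 1 :: 0 :: 0 :: 0 :: 0 :: 0 :: 0 :: 0 :: 0 :: 0 :: 0 :: 0 :: 0 :: 0 :: 0 :: nil)%Z) ::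
  (4398367336169%positive, (0 :: 0 :: 1 :: 0 :: 0 :: 0 :: 0 :: 0 :: 0 :: 0 :: 0 :: 1 :: 0 :: 0 :: 0 :: 0 :: 0 :: 0 :: 0 :: 0 :: 0 :: 0 :: 0 :: 0 :: 0 :: nil)%Z) ::
  (1813114742505%positive, (0 :: 0 :: 1 :: 0 :: 0 :: 0 :: 0 :: 0 :: 0 :: 0 :: 0 :: 0 :: (-1) :: 0 :: 0 :: 0 :: 0 :: 0 :: 0 :: 0 :: 0 :: 0 :: 0 :: 0 :: 0 :: nil)%Z) ::
  (2704582064574%positive, (0 :: 0 :: 1 :: 0 :: 0 :: 0 :: 0 :: 0 :: 0 :: 0 :: 0 :: 0 :: 0 :: (-1) :: 0 :: 0 :: 0 :: 0 :: 0 :: 0 :: 0 :: 0 :: 0 :: 0 :: 0 :: nil)%Z) ::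
  (3121473002906%positive, (0 :: 0 :: 1 :: 0 :: 0 :: 0 :: 0 :: 0 :: 0 :: 0 :: 0 :: 0 :: 0 :: 0 :: 1 :: 0 :: 0 :: 0 :: 0 :: 0 :: 0 :: 0 :: 0 :: 0 :: 0 :: nil)%Z) ::
  (2867750322510%positive, (0 :: 0 :: 1 :: 0 :: 0 :: 0 :: 0 :: 0 :: 0 :: 0 :: 0 :: 0 :: 0 :: 0 :: 0 :: 1 :: 0 :: 0 :: 0 :: 0 :: 0 :: 0 :: 0 :: 0 :: 0 :: nil)%Z) ::
  (406272829161%positive, (0 :: 0 :: 1 :: 0 :: 0 :: 0 :: 0 :: 0 :: 0 :: 0 :: 0 :: 0 :: 0 :: 0 :: 0 :: 0 :: (-1) :: 0 :: 0 :: 0 :: 0 :: 0 :: 0 :: 0 :: 0 :: nil)%Z) ::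
  (4289265574055%positive, (0 :: 0 :: 1 :: 0 :: 0 :: 0 :: 0 :: 0 :: 0 :: 0 :: 0 :: 0 :: 0 :: 0 :: 0 :: 0 :: 0 :: 1 :: 0 :: 0 :: 0 :: 0 :: 0 :: 0 :: 0 :: nil)%Z) ::
  (4077940425623%positive, (0 :: 0 :: 1 :: 0 :: 0 :: 0 :: 0 :: 0 :: 0 :: 0 :: 0 :: 0 :: 0 :: 0 :: 0 :: 0 :: 0 :: 0 :: (-1) :: 0 :: 0 :: 0 :: 0 :: 0 :: 0 :: nil)%Z) ::
  (1631143012618%positive, (0 :: 0 :: 1 :: 0 :: 0 :: 0 :: 0 :: 0 :: 0 :: 0 :: 0 :: 0 :: 0 :: 0 :: 0 :: 0 :: 0 :: 0 :: 0 :: 1 :: 0 :: 0 :: 0 :: 0 :: 0 :: nil)%Z) ::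
  (2098255908321%positive, (0 :: 0 :: 1 :: 0 :: 0 :: 0 :: 0 :: 0 :: 0 :: 0 :: 0 :: 0 :: 0 :: 0 :: 0 :: 0 :: 0 :: 0 :: 0 :: 0 :: 1 :: 0 :: 0 :: 0 :: 0 :: nil)%Z) ::
  (670958577385%positive, (0 :: 0 :: 1 :: 0 :: 0 :: 0 :: 0 :: 0 :: 0 :: 0 :: 0 :: 0 :: 0 :: 0 :: 0 :: 0 :: 0 :: 0 :: 0 :: 0 :: 0 :: (-1) :: 0 :: 0 :: 0 :: nil)%Z) ::
  (311167972220%positive, (0 :: 0 :: 1 :: 0 :: 0 :: 0 :: 0 :: 0 :: 0 :: 0 :: 0 :: 0 :: 0 :: 0 :: 0 :: 0 :: 0 :: 0 :: 0 :: 0 :: 0 :: 0 :: 1 :: 0 :: 0 :: nil)%Z) ::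
  (5079553622350%positive, (0 :: 0 :: 1 :: 0 :: 0 :: 0 :: 0 :: 0 :: 0 :: 0 :: 0 :: 0 :: 0 :: 0 :: 0 :: 0 :: 0 :: 0 :: 0 :: 0 :: 0 :: 0 :: 0 :: 1 :: 0 :: nil)%Z) ::
  (4581991011697%positive, (0 :: 0 :: 1 :: 0 :: 0 :: 0 :: 0 :: 0 :: 0 :: 0 :: 0 :: 0 :: 0 :: 0 :: 0 :: 0 :: 0 :: 0 :: 0 :: 0 :: 0 :: 0 :: 0 :: 0 :: (-1) :: nil)%Z) ::
  (17239235204003921%positive, (0 :: 0 :: 1 :: 0 :: 0 :: 0 :: 0 :: 0 :: 0 :: 0 :: 0 :: 0 :: 0 :: 0 :: 0 :: 0 :: 0 :: 0 :: 0 :: 0 :: 0 :: 0 :: 0 :: 0 :: 0 :: nil)%Z) ::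
  (21042628017522%positive, (0 :: 0 :: 0 :: 1 :: 1 :: 0 :: 0 :: 0 :: 0 :: 0 :: 0 :: 0 :: 0 :: 0 :: 0 :: 0 :: 0 :: 0 :: 0 :: 0 :: 0 :: 0 :: 0 :: 0 :: 0 :: nil)%Z) ::
  (3609342045616%positive, (0 :: 0 :: 0 :: 1 :: 0 :: 1 :: 0 :: 0 :: 0 :: 0 :: 0 :: 0 :: 0 :: 0 :: 0 :: 0 :: 0 :: 0 :: 0 :: 0 :: 0 :: 0 :: 0 :: 0 :: 0 :: nil)%Z) ::
  (21390444499996%positive, (0 :: 0 :: 0 :: 1 :: 0 :: 0 :: (-1) :: 0 :: 0 :: 0 :: 0 :: 0 :: 0 :: 0 :: 0 :: 0 :: 0 :: 0 :: 0 :: 0 :: 0 :: 0 :: 0 :: 0 :: 0 :: nil)%Z) ::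
  (12903869689886%positive, (0 :: 0 :: 0 :: 1 :: 0 :: 0 :: 0 :: 1 :: 0 :: 0 :: 0 :: 0 :: 0 :: 0 :: 0 :: 0 :: 0 :: 0 :: 0 :: 0 :: 0 :: 0 :: 0 :: 0 :: 0 :: nil)%Z) ::
  (10317824817854%positive, (0 :: 0 :: 0 :: 1 :: 0 :: 0 :: 0 :: 0 :: 1 :: 0 :: 0 :: 0 :: 0 :: 0 :: 0 :: 0 :: 0 :: 0 :: 0 :: 0 :: 0 :: 0 :: 0 :: 0 :: 0 :: nil)%Z) ::
  (22493468932440%positive, (0 :: 0 :: 0 :: 1 :: 0 :: 0 :: 0 :: 0 :: 0 :: (-1) :: 0 :: 0 :: 0 :: 0 :: 0 :: 0 :: 0 :: 0 :: 0 :: 0 :: 0 :: 0 :: 0 :: 0 :: 0 :: nil)%Z) ::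
  (20912980783680%positive, (0 :: 0 :: 0 :: 1 :: 0 :: 0 :: 0 :: 0 :: 0 :: 0 :: (-1) :: 0 :: 0 :: 0 :: 0 :: 0 :: 0 :: 0 :: 0 :: 0 :: 0 :: 0 :: 0 :: 0 :: 0 :: nil)%Z) ::
  (10116429683822%positive, (0 :: 0 :: 0 :: 1 :: 0 :: 0 :: 0 :: 0 :: 0 :: 0 :: 0 :: (-1) :: 0 :: 0 :: 0 :: 0 :: 0 :: 0 :: 0 :: 0 :: 0 :: 0 :: 0 :: 0 :: 0 :: nil)%Z) ::
  (211401978128%positive, (0 :: 0 :: 0 :: 1 :: 0 :: 0 :: 0 :: 0 :: 0 :: 0 :: 0 :: 0 :: (-1) :: 0 :: 0 :: 0 :: 0 :: 0 :: 0 :: 0 :: 0 :: 0 :: 0 :: 0 :: 0 :: nil)%Z) ::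
  (20088822424826%positive, (0 :: 0 :: 0 :: 1 :: 0 :: 0 :: 0 :: 0 :: 0 :: 0 :: 0 :: 0 :: 0 :: 1 :: 0 :: 0 :: 0 :: 0 :: 0 :: 0 :: 0 :: 0 :: 0 :: 0 :: 0 :: nil)%Z) ::
  (12704598250372%positive, (0 :: 0 :: 0 :: 1 :: 0 :: 0 :: 0 :: 0 :: 0 :: 0 :: 0 :: 0 :: 0 :: 0 :: 1 :: 0 :: 0 :: 0 :: 0 :: 0 :: 0 :: 0 :: 0 :: 0 :: 0 :: nil)%Z) ::
  (1954185070800%positive, (0 :: 0 :: 0 :: 1 :: 0 :: 0 :: 0 :: 0 :: 0 :: 0 :: 0 :: 0 :: 0 :: 0 :: 0 :: (-1) :: 0 :: 0 :: 0 :: 0 :: 0 :: 0 :: 0 :: 0 :: 0 :: nil)%Z) ::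
  (6828718401598%positive, (0 :: 0 :: 0 :: 1 :: 0 :: 0 :: 0 :: 0 :: 0 :: 0 :: 0 :: 0 :: 0 :: 0 :: 0 :: 0 :: 1 :: 0 :: 0 :: 0 :: 0 :: 0 :: 0 :: 0 :: 0 :: nil)%Z) ::
  (3957189520668%positive, (0 :: 0 :: 0 :: 1 :: 0 :: 0 :: 0 :: 0 :: 0 :: 0 :: 0 :: 0 :: 0 :: 0 :: 0 :: 0 :: 0 :: 1 :: 0 :: 0 :: 0 :: 0 :: 0 :: 0 :: 0 :: nil)%Z) ::
  (21691733756600%positive, (0 :: 0 :: 0 :: 1 :: 0 :: 0 :: 0 :: 0 :: 0 :: 0 :: 0 :: 0 :: 0 :: 0 :: 0 :: 0 :: 0 :: 0 :: (-1) :: 0 :: 0 :: 0 :: 0 :: 0 :: 0 :: nil)%Z) ::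
  (19557449717372%positive, (0 :: 0 :: 0 :: 1 :: 0 :: 0 :: 0 :: 0 :: 0 :: 0 :: 0 :: 0 :: 0 :: 0 :: 0 :: 0 :: 0 :: 0 :: 0 :: (-1) :: 0 :: 0 :: 0 :: 0 :: 0 :: nil)%Z) ::
  (5007335390004%positive, (0 :: 0 :: 0 :: 1 :: 0 :: 0 :: 0 :: 0 :: 0 :: 0 :: 0 :: 0 :: 0 :: 0 :: 0 :: 0 :: 0 :: 0 :: 0 :: 0 :: 1 :: 0 :: 0 :: 0 :: 0 :: nil)%Z) ::
  (27419791773286%positive, (0 :: 0 :: 0 :: 1 :: 0 :: 0 :: 0 :: 0 :: 0 :: 0 :: 0 :: 0 :: 0 :: 0 :: 0 :: 0 :: 0 :: 0 :: 0 :: 0 :: 0 :: 1 :: 0 :: 0 :: 0 :: nil)%Z) ::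
  (35108364914958%positive, (0 :: 0 :: 0 :: 1 :: 0 :: 0 :: 0 :: 0 :: 0 :: 0 :: 0 :: 0 :: 0 :: 0 :: 0 :: 0 :: 0 :: 0 :: 0 :: 0 :: 0 :: 0 :: 1 :: 0 :: 0 :: nil)%Z) ::
  (23581578167442%positive, (0 :: 0 :: 0 :: 1 :: 0 :: 0 :: 0 :: 0 :: 0 :: 0 :: 0 :: 0 :: 0 :: 0 :: 0 :: 0 :: 0 :: 0 :: 0 :: 0 :: 0 :: 0 :: 0 :: 1 :: 0 :: nil)%Z) ::
  (15669123470860%positive, (0 :: 0 :: 0 :: 1 :: 0 :: 0 :: 0 :: 0 :: 0 :: 0 :: 0 :: 0 :: 0 :: 0 :: 0 :: 0 :: 0 :: 0 :: 0 :: 0 :: 0 :: 0 :: 0 :: 0 :: 1 :: nil)%Z) ::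
  (16964348541592022%positive, (0 :: 0 :: 0 :: 1 :: 0 :: 0 :: 0 :: 0 :: 0 :: 0 :: 0 :: 0 :: 0 :: 0 :: 0 :: 0 :: 0 :: 0 :: 0 :: 0 :: 0 :: 0 :: 0 :: 0 :: 0 :: nil)%Z) ::
  (79959276634885%positive, (0 :: 0 :: 0 :: 0 :: 1 :: 1 :: 0 :: 0 :: 0 :: 0 :: 0 :: 0 :: 0 :: 0 :: 0 :: 0 :: 0 :: 0 :: 0 :: 0 :: 0 :: 0 :: 0 :: 0 :: 0 :: nil)%Z) ::
  (38832810749868%positive, (0 :: 0 :: 0 :: 0 :: 1 :: 0 :: 1 :: 0 :: 0 :: 0 :: 0 :: 0 :: 0 :: 0 :: 0 :: 0 :: 0 :: 0 :: 0 :: 0 :: 0 :: 0 :: 0 :: 0 :: 0 :: nil)%Z) ::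
  (81248515315425%positive, (0 :: 0 :: 0 :: 0 :: 1 :: 0 :: 0 :: (-1) :: 0 :: 0 :: 0 :: 0 :: 0 :: 0 :: 0 :: 0 :: 0 :: 0 :: 0 :: 0 :: 0 :: 0 :: 0 :: 0 :: 0 :: nil)%Z) ::
  (93076294226132%positive, (0 :: 0 :: 0 :: 0 :: 1 :: 0 :: 0 :: 0 :: 1 :: 0 :: 0 :: 0 :: 0 :: 0 :: 0 :: 0 :: 0 :: 0 :: 0 :: 0 :: 0 :: 0 :: 0 :: 0 :: 0 :: nil)%Z) ::
  (9958666098557%positive, (0 :: 0 :: 0 :: 0 :: 1 :: 0 :: 0 :: 0 :: 0 :: (-1) :: 0 :: 0 :: 0 :: 0 :: 0 :: 0 :: 0 :: 0 :: 0 :: 0 :: 0 :: 0 :: 0 :: 0 :: 0 :: nil)%Z) ::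
  (21742719658486%positive, (0 :: 0 :: 0 :: 0 :: 1 :: 0 :: 0 :: 0 :: 0 :: 0 :: (-1) :: 0 :: 0 :: 0 :: 0 :: 0 :: 0 :: 0 :: 0 :: 0 :: 0 :: 0 :: 0 :: 0 :: 0 :: nil)%Z) ::
  (108484389978624%positive, (0 :: 0 :: 0 :: 0 :: 1 :: 0 :: 0 :: 0 :: 0 :: 0 :: 0 :: 1 :: 0 :: 0 :: 0 :: 0 :: 0 :: 0 :: 0 :: 0 :: 0 :: 0 :: 0 :: 0 :: 0 :: nil)%Z) ::
  (9399454714868%positive, (0 :: 0 :: 0 :: 0 :: 1 :: 0 :: 0 :: 0 :: 0 :: 0 :: 0 :: 0 :: (-1) :: 0 :: 0 :: 0 :: 0 :: 0 :: 0 :: 0 :: 0 :: 0 :: 0 :: 0 :: 0 :: nil)%Z) ::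
  (96860863823683%positive, (0 :: 0 :: 0 :: 0 :: 1 :: 0 :: 0 :: 0 :: 0 :: 0 :: 0 :: 0 :: 0 :: 1 :: 0 :: 0 :: 0 :: 0 :: 0 :: 0 :: 0 :: 0 :: 0 :: 0 :: 0 :: nil)%Z) ::
  (115227211420727%positive, (0 :: 0 :: 0 :: 0 :: 1 :: 0 :: 0 :: 0 :: 0 :: 0 :: 0 :: 0 :: 0 :: 0 :: 1 :: 0 :: 0 :: 0 :: 0 :: 0 :: 0 :: 0 :: 0 :: 0 :: 0 :: nil)%Z) ::
  (15519071091077%positive, (0 :: 0 :: 0 :: 0 :: 1 :: 0 :: 0 :: 0 :: 0 :: 0 :: 0 :: 0 :: 0 :: 0 :: 0 :: 1 :: 0 :: 0 :: 0 :: 0 :: 0 :: 0 :: 0 :: 0 :: 0 :: nil)%Z) ::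
  (45963975626719%positive, (0 :: 0 :: 0 :: 0 :: 1 :: 0 :: 0 :: 0 :: 0 :: 0 :: 0 :: 0 :: 0 :: 0 :: 0 :: 0 :: (-1) :: 0 :: 0 :: 0 :: 0 :: 0 :: 0 :: 0 :: 0 :: nil)%Z) ::
  (93792812449261%positive, (0 :: 0 :: 0 :: 0 :: 1 :: 0 :: 0 :: 0 :: 0 :: 0 :: 0 :: 0 :: 0 :: 0 :: 0 :: 0 :: 0 :: 1 :: 0 :: 0 :: 0 :: 0 :: 0 :: 0 :: 0 :: nil)%Z) ::
  (15917284108416%positive, (0 :: 0 :: 0 :: 0 :: 1 :: 0 :: 0 :: 0 :: 0 :: 0 :: 0 :: 0 :: 0 :: 0 :: 0 :: 0 :: 0 :: 0 :: (-1) :: 0 :: 0 :: 0 :: 0 :: 0 :: 0 :: nil)%Z) ::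
  (89708138357145%positive, (0 :: 0 :: 0 :: 0 :: 1 :: 0 :: 0 :: 0 :: 0 :: 0 :: 0 :: 0 :: 0 :: 0 :: 0 :: 0 :: 0 :: 0 :: 0 :: 1 :: 0 :: 0 :: 0 :: 0 :: 0 :: nil)%Z) ::
  (85891652726671%positive, (0 :: 0 :: 0 :: 0 :: 1 :: 0 :: 0 :: 0 :: 0 :: 0 :: 0 :: 0 :: 0 :: 0 :: 0 :: 0 :: 0 :: 0 :: 0 :: 0 :: (-1) :: 0 :: 0 :: 0 :: 0 :: nil)%Z) ::
  (93884541458776%positive, (0 :: 0 :: 0 :: 0 :: 1 :: 0 :: 0 :: 0 :: 0 :: 0 :: 0 :: 0 :: 0 :: 0 :: 0 :: 0 :: 0 :: 0 :: 0 :: 0 :: 0 :: 1 :: 0 :: 0 :: 0 :: nil)%Z) ::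
  (5316331387378%positive, (0 :: 0 :: 0 :: 0 :: 1 :: 0 :: 0 :: 0 :: 0 :: 0 :: 0 :: 0 :: 0 :: 0 :: 0 :: 0 :: 0 :: 0 :: 0 :: 0 :: 0 :: 0 :: (-1) :: 0 :: 0 :: nil)%Z) ::
  (80365771612770%positive, (0 :: 0 :: 0 :: 0 :: 1 :: 0 :: 0 :: 0 :: 0 :: 0 :: 0 :: 0 :: 0 :: 0 :: 0 :: 0 :: 0 :: 0 :: 0 :: 0 :: 0 :: 0 :: 0 :: (-1) :: 0 :: nil)%Z) ::
  (55353428758356%positive, (0 :: 0 :: 0 :: 0 :: 1 :: 0 :: 0 :: 0 :: 0 :: 0 :: 0 :: 0 :: 0 :: 0 :: 0 :: 0 :: 0 :: 0 :: 0 :: 0 :: 0 :: 0 :: 0 :: 0 :: 1 :: nil)%Z) ::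
  (16019721153070666%positive, (0 :: 0 :: 0 :: 0 :: 1 :: 0 :: 0 :: 0 :: 0 :: 0 :: 0 :: 0 :: 0 :: 0 :: 0 :: 0 :: 0 :: 0 :: 0 :: 0 :: 0 :: 0 :: 0 :: 0 :: 0 :: nil)%Z) ::
  (27568172091054%positive, (0 :: 0 :: 0 :: 0 :: 0 :: 1 :: (-1) :: 0 :: 0 :: 0 :: 0 :: 0 :: 0 :: 0 :: 0 :: 0 :: 0 :: 0 :: 0 :: 0 :: 0 :: 0 :: 0 :: 0 :: 0 :: nil)%Z) ::
  (50423457501721%positive, (0 :: 0 :: 0 :: 0 :: 0 :: 1 :: 0 :: (-1) :: 0 :: 0 :: 0 :: 0 :: 0 :: 0 :: 0 :: 0 :: 0 :: 0 :: 0 :: 0 :: 0 :: 0 :: 0 :: 0 :: 0 :: nil)%Z) ::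
  (30355652706451%positive, (0 :: 0 :: 0 :: 0 :: 0 :: 1 :: 0 :: 0 :: 1 :: 0 :: 0 :: 0 :: 0 :: 0 :: 0 :: 0 :: 0 :: 0 :: 0 :: 0 :: 0 :: 0 :: 0 :: 0 :: 0 :: nil)%Z) ::
  (12577923825340%positive, (0 :: 0 :: 0 :: 0 :: 0 :: 1 :: 0 :: 0 :: 0 :: (-1) :: 0 :: 0 :: 0 :: 0 :: 0 :: 0 :: 0 :: 0 :: 0 :: 0 :: 0 :: 0 :: 0 :: 0 :: 0 :: nil)%Z) ::
  (84841896902742%positive, (0 :: 0 :: 0 :: 0 :: 0 :: 1 :: 0 :: 0 :: 0 :: 0 :: 1 :: 0 :: 0 :: 0 :: 0 :: 0 :: 0 :: 0 :: 0 :: 0 :: 0 :: 0 :: 0 :: 0 :: 0 :: nil)%Z) ::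
  (3367899098520%positive, (0 :: 0 :: 0 :: 0 :: 0 :: 1 :: 0 :: 0 :: 0 :: 0 :: 0 :: (-1) :: 0 :: 0 :: 0 :: 0 :: 0 :: 0 :: 0 :: 0 :: 0 :: 0 :: 0 :: 0 :: 0 :: nil)%Z) ::
  (15387659364948%positive, (0 :: 0 :: 0 :: 0 :: 0 :: 1 :: 0 :: 0 :: 0 :: 0 :: 0 :: 0 :: 1 :: 0 :: 0 :: 0 :: 0 :: 0 :: 0 :: 0 :: 0 :: 0 :: 0 :: 0 :: 0 :: nil)%Z) ::
  (37958106681532%positive, (0 :: 0 :: 0 :: 0 :: 0 :: 1 :: 0 :: 0 :: 0 :: 0 :: 0 :: 0 :: 0 :: 1 :: 0 :: 0 :: 0 :: 0 :: 0 :: 0 :: 0 :: 0 :: 0 :: 0 :: 0 :: nil)%Z) ::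
  (67755566371617%positive, (0 :: 0 :: 0 :: 0 :: 0 :: 1 :: 0 :: 0 :: 0 :: 0 :: 0 :: 0 :: 0 :: 0 :: (-1) :: 0 :: 0 :: 0 :: 0 :: 0 :: 0 :: 0 :: 0 :: 0 :: 0 :: nil)%Z) ::
  (69479382159382%positive, (0 :: 0 :: 0 :: 0 :: 0 :: 1 :: 0 :: 0 :: 0 :: 0 :: 0 :: 0 :: 0 :: 0 :: 0 :: 1 :: 0 :: 0 :: 0 :: 0 :: 0 :: 0 :: 0 :: 0 :: 0 :: nil)%Z) ::
  (25625464561123%positive, (0 :: 0 :: 0 :: 0 :: 0 :: 1 :: 0 :: 0 :: 0 :: 0 :: 0 :: 0 :: 0 :: 0 :: 0 :: 0 :: (-1) :: 0 :: 0 :: 0 :: 0 :: 0 :: 0 :: 0 :: 0 :: nil)%Z) ::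
  (47193555355954%positive, (0 :: 0 :: 0 :: 0 :: 0 :: 1 :: 0 :: 0 :: 0 :: 0 :: 0 :: 0 :: 0 :: 0 :: 0 :: 0 :: 0 :: (-1) :: 0 :: 0 :: 0 :: 0 :: 0 :: 0 :: 0 :: nil)%Z) ::
  (60533718559510%positive, (0 :: 0 :: 0 :: 0 :: 0 :: 1 :: 0 :: 0 :: 0 :: 0 :: 0 :: 0 :: 0 :: 0 :: 0 :: 0 :: 0 :: 0 :: 1 :: 0 :: 0 :: 0 :: 0 :: 0 :: 0 :: nil)%Z) ::
  (51366540342639%positive, (0 :: 0 :: 0 :: 0 :: 0 :: 1 :: 0 :: 0 :: 0 :: 0 :: 0 :: 0 :: 0 :: 0 :: 0 :: 0 :: 0 :: 0 :: 0 :: 1 :: 0 :: 0 :: 0 :: 0 :: 0 :: nil)%Z) ::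
  (34749515498213%positive, (0 :: 0 :: 0 :: 0 :: 0 :: 1 :: 0 :: 0 :: 0 :: 0 :: 0 :: 0 :: 0 :: 0 :: 0 :: 0 :: 0 :: 0 :: 0 :: 0 :: (-1) :: 0 :: 0 :: 0 :: 0 :: nil)%Z) ::
  (21791961108818%positive, (0 :: 0 :: 0 :: 0 :: 0 :: 1 :: 0 :: 0 :: 0 :: 0 :: 0 :: 0 :: 0 :: 0 :: 0 :: 0 :: 0 :: 0 :: 0 :: 0 :: 0 :: (-1) :: 0 :: 0 :: 0 :: nil)%Z) ::
  (7484296615883%positive, (0 :: 0 :: 0 :: 0 :: 0 :: 1 :: 0 :: 0 :: 0 :: 0 :: 0 :: 0 :: 0 :: 0 :: 0 :: 0 :: 0 :: 0 :: 0 :: 0 :: 0 :: 0 :: 1 :: 0 :: 0 :: nil)%Z) ::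
  (12150276286782%positive, (0 :: 0 :: 0 :: 0 :: 0 :: 1 :: 0 :: 0 :: 0 :: 0 :: 0 :: 0 :: 0 :: 0 :: 0 :: 0 :: 0 :: 0 :: 0 :: 0 :: 0 :: 0 :: 0 :: (-1) :: 0 :: nil)%Z) ::
  (58079720488260%positive, (0 :: 0 :: 0 :: 0 :: 0 :: 1 :: 0 :: 0 :: 0 :: 0 :: 0 :: 0 :: 0 :: 0 :: 0 :: 0 :: 0 :: 0 :: 0 :: 0 :: 0 :: 0 :: 0 :: 0 :: (-1) :: nil)%Z) ::
  (16475344799330333%positive, (0 :: 0 :: 0 :: 0 :: 0 :: 1 :: 0 :: 0 :: 0 :: 0 :: 0 :: 0 :: 0 :: 0 :: 0 :: 0 :: 0 :: 0 :: 0 :: 0 :: 0 :: 0 :: 0 :: 0 :: 0 :: nil)%Z) ::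
  (15051478663910%positive, (0 :: 0 :: 0 :: 0 :: 0 :: 0 :: 1 :: 1 :: 0 :: 0 :: 0 :: 0 :: 0 :: 0 :: 0 :: 0 :: 0 :: 0 :: 0 :: 0 :: 0 :: 0 :: 0 :: 0 :: 0 :: nil)%Z) ::
  (7379530917176%positive, (0 :: 0 :: 0 :: 0 :: 0 :: 0 :: 1 :: 0 :: (-1) :: 0 :: 0 :: 0 :: 0 :: 0 :: 0 :: 0 :: 0 :: 0 :: 0 :: 0 :: 0 :: 0 :: 0 :: 0 :: 0 :: nil)%Z) ::
  (29196048507378%positive, (0 :: 0 :: 0 :: 0 :: 0 :: 0 :: 1 :: 0 :: 0 :: 1 :: 0 :: 0 :: 0 :: 0 :: 0 :: 0 :: 0 :: 0 :: 0 :: 0 :: 0 :: 0 :: 0 :: 0 :: 0 :: nil)%Z) ::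
  (4504063894144%positive, (0 :: 0 :: 0 :: 0 :: 0 :: 0 :: 1 :: 0 :: 0 :: 0 :: 1 :: 0 :: 0 :: 0 :: 0 :: 0 :: 0 :: 0 :: 0 :: 0 :: 0 :: 0 :: 0 :: 0 :: 0 :: nil)%Z) ::
  (8760488368198%positive, (0 :: 0 :: 0 :: 0 :: 0 :: 0 :: 1 :: 0 :: 0 :: 0 :: 0 :: (-1) :: 0 :: 0 :: 0 :: 0 :: 0 :: 0 :: 0 :: 0 :: 0 :: 0 :: 0 :: 0 :: 0 :: nil)%Z) ::
  (7536678855528%positive, (0 :: 0 :: 0 :: 0 :: 0 :: 0 :: 1 :: 0 :: 0 :: 0 :: 0 :: 0 :: 1 :: 0 :: 0 :: 0 :: 0 :: 0 :: 0 :: 0 :: 0 :: 0 :: 0 :: 0 :: 0 :: nil)%Z) ::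
  (1099085685388%positive, (0 :: 0 :: 0 :: 0 :: 0 :: 0 :: 1 :: 0 :: 0 :: 0 :: 0 :: 0 :: 0 :: 1 :: 0 :: 0 :: 0 :: 0 :: 0 :: 0 :: 0 :: 0 :: 0 :: 0 :: 0 :: nil)%Z) ::
  (34059822497820%positive, (0 :: 0 :: 0 :: 0 :: 0 :: 0 :: 1 :: 0 :: 0 :: 0 :: 0 :: 0 :: 0 :: 0 :: (-1) :: 0 :: 0 :: 0 :: 0 :: 0 :: 0 :: 0 :: 0 :: 0 :: 0 :: nil)%Z) ::
  (29918448752446%positive, (0 :: 0 :: 0 :: 0 :: 0 :: 0 :: 1 :: 0 :: 0 :: 0 :: 0 :: 0 :: 0 :: 0 :: 0 :: 1 :: 0 :: 0 :: 0 :: 0 :: 0 :: 0 :: 0 :: 0 :: 0 :: nil)%Z) ::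
  (9120107521202%positive, (0 :: 0 :: 0 :: 0 :: 0 :: 0 :: 1 :: 0 :: 0 :: 0 :: 0 :: 0 :: 0 :: 0 :: 0 :: 0 :: 1 :: 0 :: 0 :: 0 :: 0 :: 0 :: 0 :: 0 :: 0 :: nil)%Z) ::
  (6287803748582%positive, (0 :: 0 :: 0 :: 0 :: 0 :: 0 :: 1 :: 0 :: 0 :: 0 :: 0 :: 0 :: 0 :: 0 :: 0 :: 0 :: 0 :: (-1) :: 0 :: 0 :: 0 :: 0 :: 0 :: 0 :: 0 :: nil)%Z) ::
  (1344656862060%positive, (0 :: 0 :: 0 :: 0 :: 0 :: 0 :: 1 :: 0 :: 0 :: 0 :: 0 :: 0 :: 0 :: 0 :: 0 :: 0 :: 0 :: 0 :: 1 :: 0 :: 0 :: 0 :: 0 :: 0 :: 0 :: nil)%Z) ::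
  (35575621249276%positive, (0 :: 0 :: 0 :: 0 :: 0 :: 0 :: 1 :: 0 :: 0 :: 0 :: 0 :: 0 :: 0 :: 0 :: 0 :: 0 :: 0 :: 0 :: 0 :: (-1) :: 0 :: 0 :: 0 :: 0 :: 0 :: nil)%Z) ::
  (9039230586776%positive, (0 :: 0 :: 0 :: 0 :: 0 :: 0 :: 1 :: 0 :: 0 :: 0 :: 0 :: 0 :: 0 :: 0 :: 0 :: 0 :: 0 :: 0 :: 0 :: 0 :: 1 :: 0 :: 0 :: 0 :: 0 :: nil)%Z) ::
  (3465581289958%positive, (0 :: 0 :: 0 :: 0 :: 0 :: 0 :: 1 :: 0 :: 0 :: 0 :: 0 :: 0 :: 0 :: 0 :: 0 :: 0 :: 0 :: 0 :: 0 :: 0 :: 0 :: (-1) :: 0 :: 0 :: 0 :: nil)%Z) ::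
  (3470614996896%positive, (0 :: 0 :: 0 :: 0 :: 0 :: 0 :: 1 :: 0 :: 0 :: 0 :: 0 :: 0 :: 0 :: 0 :: 0 :: 0 :: 0 :: 0 :: 0 :: 0 :: 0 :: 0 :: (-1) :: 0 :: 0 :: nil)%Z) ::
  (13967465309274%positive, (0 :: 0 :: 0 :: 0 :: 0 :: 0 :: 1 :: 0 :: 0 :: 0 :: 0 :: 0 :: 0 :: 0 :: 0 :: 0 :: 0 :: 0 :: 0 :: 0 :: 0 :: 0 :: 0 :: 1 :: 0 :: nil)%Z) ::
  (11846683550288%positive, (0 :: 0 :: 0 :: 0 :: 0 :: 0 :: 1 :: 0 :: 0 :: 0 :: 0 :: 0 :: 0 :: 0 :: 0 :: 0 :: 0 :: 0 :: 0 :: 0 :: 0 :: 0 :: 0 :: 0 :: (-1) :: nil)%Z) ::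
  (16943362352000956%positive, (0 :: 0 :: 0 :: 0 :: 0 :: 0 :: 1 :: 0 :: 0 :: 0 :: 0 :: 0 :: 0 :: 0 :: 0 :: 0 :: 0 :: 0 :: 0 :: 0 :: 0 :: 0 :: 0 :: 0 :: 0 :: nil)%Z) ::
  (752811026755%positive, (0 :: 0 :: 0 :: 0 :: 0 :: 0 :: 0 :: 1 :: 1 :: 0 :: 0 :: 0 :: 0 :: 0 :: 0 :: 0 :: 0 :: 0 :: 0 :: 0 :: 0 :: 0 :: 0 :: 0 :: 0 :: nil)%Z) ::
  (23308985242073%positive, (0 :: 0 :: 0 :: 0 :: 0 :: 0 :: 0 :: 1 :: 0 :: 1 :: 0 :: 0 :: 0 :: 0 :: 0 :: 0 :: 0 :: 0 :: 0 :: 0 :: 0 :: 0 :: 0 :: 0 :: 0 :: nil)%Z) ::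
  (22994100753502%positive, (0 :: 0 :: 0 :: 0 :: 0 :: 0 :: 0 :: 1 :: 0 :: 0 :: (-1) :: 0 :: 0 :: 0 :: 0 :: 0 :: 0 :: 0 :: 0 :: 0 :: 0 :: 0 :: 0 :: 0 :: 0 :: nil)%Z) ::
  (504904666943%positive, (0 :: 0 :: 0 :: 0 :: 0 :: 0 :: 0 :: 1 :: 0 :: 0 :: 0 :: 1 :: 0 :: 0 :: 0 :: 0 :: 0 :: 0 :: 0 :: 0 :: 0 :: 0 :: 0 :: 0 :: 0 :: nil)%Z) ::
  (487885262058%positive, (0 :: 0 :: 0 :: 0 :: 0 :: 0 :: 0 :: 1 :: 0 :: 0 :: 0 :: 0 :: (-1) :: 0 :: 0 :: 0 :: 0 :: 0 :: 0 :: 0 :: 0 :: 0 :: 0 :: 0 :: 0 :: nil)%Z) ::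
  (6910604381472%positive, (0 :: 0 :: 0 :: 0 :: 0 :: 0 :: 0 :: 1 :: 0 :: 0 :: 0 :: 0 :: 0 :: (-1) :: 0 :: 0 :: 0 :: 0 :: 0 :: 0 :: 0 :: 0 :: 0 :: 0 :: 0 :: nil)%Z) ::
  (72364920683178%positive, (0 :: 0 :: 0 :: 0 :: 0 :: 0 :: 0 :: 1 :: 0 :: 0 :: 0 :: 0 :: 0 :: 0 :: 1 :: 0 :: 0 :: 0 :: 0 :: 0 :: 0 :: 0 :: 0 :: 0 :: 0 :: nil)%Z) ::
  (39838559446934%positive, (0 :: 0 :: 0 :: 0 :: 0 :: 0 :: 0 :: 1 :: 0 :: 0 :: 0 :: 0 :: 0 :: 0 :: 0 :: 1 :: 0 :: 0 :: 0 :: 0 :: 0 :: 0 :: 0 :: 0 :: 0 :: nil)%Z) ::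
  (3197219559994%positive, (0 :: 0 :: 0 :: 0 :: 0 :: 0 :: 0 :: 1 :: 0 :: 0 :: 0 :: 0 :: 0 :: 0 :: 0 :: 0 :: (-1) :: 0 :: 0 :: 0 :: 0 :: 0 :: 0 :: 0 :: 0 :: nil)%Z) ::
  (1236039652216%positive, (0 :: 0 :: 0 :: 0 :: 0 :: 0 :: 0 :: 1 :: 0 :: 0 :: 0 :: 0 :: 0 :: 0 :: 0 :: 0 :: 0 :: 1 :: 0 :: 0 :: 0 :: 0 :: 0 :: 0 :: 0 :: nil)%Z) ::
  (2523221396016%positive, (0 :: 0 :: 0 :: 0 :: 0 :: 0 :: 0 :: 1 :: 0 :: 0 :: 0 :: 0 :: 0 :: 0 :: 0 :: 0 :: 0 :: 0 :: (-1) :: 0 :: 0 :: 0 :: 0 :: 0 :: 0 :: nil)%Z) ::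
  (401872333807%positive, (0 :: 0 :: 0 :: 0 :: 0 :: 0 :: 0 :: 1 :: 0 :: 0 :: 0 :: 0 :: 0 :: 0 :: 0 :: 0 :: 0 :: 0 :: 0 :: (-1) :: 0 :: 0 :: 0 :: 0 :: 0 :: nil)%Z) ::
  (15145735980812%positive, (0 :: 0 :: 0 :: 0 :: 0 :: 0 :: 0 :: 1 :: 0 :: 0 :: 0 :: 0 :: 0 :: 0 :: 0 :: 0 :: 0 :: 0 :: 0 :: 0 :: 1 :: 0 :: 0 :: 0 :: 0 :: nil)%Z) ::
  (734465315975%positive, (0 :: 0 :: 0 :: 0 :: 0 :: 0 :: 0 :: 1 :: 0 :: 0 :: 0 :: 0 :: 0 :: 0 :: 0 :: 0 :: 0 :: 0 :: 0 :: 0 :: 0 :: 1 :: 0 :: 0 :: 0 :: nil)%Z) ::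
  (6912866790612%positive, (0 :: 0 :: 0 :: 0 :: 0 :: 0 :: 0 :: 1 :: 0 :: 0 :: 0 :: 0 :: 0 :: 0 :: 0 :: 0 :: 0 :: 0 :: 0 :: 0 :: 0 :: 0 :: (-1) :: 0 :: 0 :: nil)%Z) ::
  (422122853487%positive, (0 :: 0 :: 0 :: 0 :: 0 :: 0 :: 0 :: 1 :: 0 :: 0 :: 0 :: 0 :: 0 :: 0 :: 0 :: 0 :: 0 :: 0 :: 0 :: 0 :: 0 :: 0 :: 0 :: (-1) :: 0 :: nil)%Z) ::
  (322956594485%positive, (0 :: 0 :: 0 :: 0 :: 0 :: 0 :: 0 :: 1 :: 0 :: 0 :: 0 :: 0 :: 0 :: 0 :: 0 :: 0 :: 0 :: 0 :: 0 :: 0 :: 0 :: 0 :: 0 :: 0 :: (-1) :: nil)%Z) ::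
  (16921777754106303%positive, (0 :: 0 :: 0 :: 0 :: 0 :: 0 :: 0 :: 1 :: 0 :: 0 :: 0 :: 0 :: 0 :: 0 :: 0 :: 0 :: 0 :: 0 :: 0 :: 0 :: 0 :: 0 :: 0 :: 0 :: 0 :: nil)%Z) ::
  (23328906955601%positive, (0 :: 0 :: 0 :: 0 :: 0 :: 0 :: 0 :: 0 :: 1 :: (-1) :: 0 :: 0 :: 0 :: 0 :: 0 :: 0 :: 0 :: 0 :: 0 :: 0 :: 0 :: 0 :: 0 :: 0 :: 0 :: nil)%Z) ::
  (10288703907180%positive, (0 :: 0 :: 0 :: 0 :: 0 :: 0 :: 0 :: 0 :: 1 :: 0 :: 1 :: 0 :: 0 :: 0 :: 0 :: 0 :: 0 :: 0 :: 0 :: 0 :: 0 :: 0 :: 0 :: 0 :: 0 :: nil)%Z) ::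
  (22144072879957%positive, (0 :: 0 :: 0 :: 0 :: 0 :: 0 :: 0 :: 0 :: 1 :: 0 :: 0 :: (-1) :: 0 :: 0 :: 0 :: 0 :: 0 :: 0 :: 0 :: 0 :: 0 :: 0 :: 0 :: 0 :: 0 :: nil)%Z) ::
  (8950140854912%positive, (0 :: 0 :: 0 :: 0 :: 0 :: 0 :: 0 :: 0 :: 1 :: 0 :: 0 :: 0 :: 1 :: 0 :: 0 :: 0 :: 0 :: 0 :: 0 :: 0 :: 0 :: 0 :: 0 :: 0 :: 0 :: nil)%Z) ::
  (8737853837362%positive, (0 :: 0 :: 0 :: 0 :: 0 :: 0 :: 0 :: 0 :: 1 :: 0 :: 0 :: 0 :: 0 :: (-1) :: 0 :: 0 :: 0 :: 0 :: 0 :: 0 :: 0 :: 0 :: 0 :: 0 :: 0 :: nil)%Z) ::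
  (46829317344240%positive, (0 :: 0 :: 0 :: 0 :: 0 :: 0 :: 0 :: 0 :: 1 :: 0 :: 0 :: 0 :: 0 :: 0 :: (-1) :: 0 :: 0 :: 0 :: 0 :: 0 :: 0 :: 0 :: 0 :: 0 :: 0 :: nil)%Z) ::
  (62457411859651%positive, (0 :: 0 :: 0 :: 0 :: 0 :: 0 :: 0 :: 0 :: 1 :: 0 :: 0 :: 0 :: 0 :: 0 :: 0 :: (-1) :: 0 :: 0 :: 0 :: 0 :: 0 :: 0 :: 0 :: 0 :: 0 :: nil)%Z) ::
  (12720116520589%positive, (0 :: 0 :: 0 :: 0 :: 0 :: 0 :: 0 :: 0 :: 1 :: 0 :: 0 :: 0 :: 0 :: 0 :: 0 :: 0 :: 1 :: 0 :: 0 :: 0 :: 0 :: 0 :: 0 :: 0 :: 0 :: nil)%Z) ::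
  (11367787597195%positive, (0 :: 0 :: 0 :: 0 :: 0 :: 0 :: 0 :: 0 :: 1 :: 0 :: 0 :: 0 :: 0 :: 0 :: 0 :: 0 :: 0 :: 1 :: 0 :: 0 :: 0 :: 0 :: 0 :: 0 :: 0 :: nil)%Z) ::
  (43981754155126%positive, (0 :: 0 :: 0 :: 0 :: 0 :: 0 :: 0 :: 0 :: 1 :: 0 :: 0 :: 0 :: 0 :: 0 :: 0 :: 0 :: 0 :: 0 :: (-1) :: 0 :: 0 :: 0 :: 0 :: 0 :: 0 :: nil)%Z) ::
  (4951839974616%positive, (0 :: 0 :: 0 :: 0 :: 0 :: 0 :: 0 :: 0 :: 1 :: 0 :: 0 :: 0 :: 0 :: 0 :: 0 :: 0 :: 0 :: 0 :: 0 :: (-1) :: 0 :: 0 :: 0 :: 0 :: 0 :: nil)%Z) ::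
  (19100407640862%positive, (0 :: 0 :: 0 :: 0 :: 0 :: 0 :: 0 :: 0 :: 1 :: 0 :: 0 :: 0 :: 0 :: 0 :: 0 :: 0 :: 0 :: 0 :: 0 :: 0 :: (-1) :: 0 :: 0 :: 0 :: 0 :: nil)%Z) ::
  (23420322827149%positive, (0 :: 0 :: 0 :: 0 :: 0 :: 0 :: 0 :: 0 :: 1 :: 0 :: 0 :: 0 :: 0 :: 0 :: 0 :: 0 :: 0 :: 0 :: 0 :: 0 :: 0 :: (-1) :: 0 :: 0 :: 0 :: nil)%Z) ::
  (8814796238166%positive, (0 :: 0 :: 0 :: 0 :: 0 :: 0 :: 0 :: 0 :: 1 :: 0 :: 0 :: 0 :: 0 :: 0 :: 0 :: 0 :: 0 :: 0 :: 0 :: 0 :: 0 :: 0 :: 1 :: 0 :: 0 :: nil)%Z) ::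
  (4533962783757%positive, (0 :: 0 :: 0 :: 0 :: 0 :: 0 :: 0 :: 0 :: 1 :: 0 :: 0 :: 0 :: 0 :: 0 :: 0 :: 0 :: 0 :: 0 :: 0 :: 0 :: 0 :: 0 :: 0 :: (-1) :: 0 :: nil)%Z) ::
  (30632854361004%positive, (0 :: 0 :: 0 :: 0 :: 0 :: 0 :: 0 :: 0 :: 1 :: 0 :: 0 :: 0 :: 0 :: 0 :: 0 :: 0 :: 0 :: 0 :: 0 :: 0 :: 0 :: 0 :: 0 :: 0 :: 1 :: nil)%Z) ::
  (16793957053221706%positive, (0 :: 0 :: 0 :: 0 :: 0 :: 0 :: 0 :: 0 :: 1 :: 0 :: 0 :: 0 :: 0 :: 0 :: 0 :: 0 :: 0 :: 0 :: 0 :: 0 :: 0 :: 0 :: 0 :: 0 :: 0 :: nil)%Z) ::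
  (35014306894214%positive, (0 :: 0 :: 0 :: 0 :: 0 :: 0 :: 0 :: 0 :: 0 :: 1 :: 1 :: 0 :: 0 :: 0 :: 0 :: 0 :: 0 :: 0 :: 0 :: 0 :: 0 :: 0 :: 0 :: 0 :: 0 :: nil)%Z) ::
  (104546419554951%positive, (0 :: 0 :: 0 :: 0 :: 0 :: 0 :: 0 :: 0 :: 0 :: 1 :: 0 :: (-1) :: 0 :: 0 :: 0 :: 0 :: 0 :: 0 :: 0 :: 0 :: 0 :: 0 :: 0 :: 0 :: 0 :: nil)%Z) ::
  (149224597044990%positive, (0 :: 0 :: 0 :: 0 :: 0 :: 0 :: 0 :: 0 :: 0 :: 1 :: 0 :: 0 :: 1 :: 0 :: 0 :: 0 :: 0 :: 0 :: 0 :: 0 :: 0 :: 0 :: 0 :: 0 :: 0 :: nil)%Z) ::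
  (26400356226114%positive, (0 :: 0 :: 0 :: 0 :: 0 :: 0 :: 0 :: 0 :: 0 :: 1 :: 0 :: 0 :: 0 :: (-1) :: 0 :: 0 :: 0 :: 0 :: 0 :: 0 :: 0 :: 0 :: 0 :: 0 :: 0 :: nil)%Z) ::
  (176795877246212%positive, (0 :: 0 :: 0 :: 0 :: 0 :: 0 :: 0 :: 0 :: 0 :: 1 :: 0 :: 0 :: 0 :: 0 :: (-1) :: 0 :: 0 :: 0 :: 0 :: 0 :: 0 :: 0 :: 0 :: 0 :: 0 :: nil)%Z) ::
  (211370455951168%positive, (0 :: 0 :: 0 :: 0 :: 0 :: 0 :: 0 :: 0 :: 0 :: 1 :: 0 :: 0 :: 0 :: 0 :: 0 :: 1 :: 0 :: 0 :: 0 :: 0 :: 0 :: 0 :: 0 :: 0 :: 0 :: nil)%Z) ::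
  (145978996797069%positive, (0 :: 0 :: 0 :: 0 :: 0 :: 0 :: 0 :: 0 :: 0 :: 1 :: 0 :: 0 :: 0 :: 0 :: 0 :: 0 :: (-1) :: 0 :: 0 :: 0 :: 0 :: 0 :: 0 :: 0 :: 0 :: nil)%Z) ::
  (209446494198902%positive, (0 :: 0 :: 0 :: 0 :: 0 :: 0 :: 0 :: 0 :: 0 :: 1 :: 0 :: 0 :: 0 :: 0 :: 0 :: 0 :: 0 :: 1 :: 0 :: 0 :: 0 :: 0 :: 0 :: 0 :: 0 :: nil)%Z) ::
  (255913306752647%positive, (0 :: 0 :: 0 :: 0 :: 0 :: 0 :: 0 :: 0 :: 0 :: 1 :: 0 :: 0 :: 0 :: 0 :: 0 :: 0 :: 0 :: 0 :: (-1) :: 0 :: 0 :: 0 :: 0 :: 0 :: 0 :: nil)%Z) ::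
  (38236329306051%positive, (0 :: 0 :: 0 :: 0 :: 0 :: 0 :: 0 :: 0 :: 0 :: 1 :: 0 :: 0 :: 0 :: 0 :: 0 :: 0 :: 0 :: 0 :: 0 :: (-1) :: 0 :: 0 :: 0 :: 0 :: 0 :: nil)%Z) ::
  (189172493211592%positive, (0 :: 0 :: 0 :: 0 :: 0 :: 0 :: 0 :: 0 :: 0 :: 1 :: 0 :: 0 :: 0 :: 0 :: 0 :: 0 :: 0 :: 0 :: 0 :: 0 :: (-1) :: 0 :: 0 :: 0 :: 0 :: nil)%Z) ::
  (50373577476337%positive, (0 :: 0 :: 0 :: 0 :: 0 :: 0 :: 0 :: 0 :: 0 :: 1 :: 0 :: 0 :: 0 :: 0 :: 0 :: 0 :: 0 :: 0 :: 0 :: 0 :: 0 :: (-1) :: 0 :: 0 :: 0 :: nil)%Z) ::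
  (198406442414218%positive, (0 :: 0 :: 0 :: 0 :: 0 :: 0 :: 0 :: 0 :: 0 :: 1 :: 0 :: 0 :: 0 :: 0 :: 0 :: 0 :: 0 :: 0 :: 0 :: 0 :: 0 :: 0 :: 1 :: 0 :: 0 :: nil)%Z) ::
  (168529980973647%positive, (0 :: 0 :: 0 :: 0 :: 0 :: 0 :: 0 :: 0 :: 0 :: 1 :: 0 :: 0 :: 0 :: 0 :: 0 :: 0 :: 0 :: 0 :: 0 :: 0 :: 0 :: 0 :: 0 :: (-1) :: 0 :: nil)%Z) ::
  (100927544639799%positive, (0 :: 0 :: 0 :: 0 :: 0 :: 0 :: 0 :: 0 :: 0 :: 1 :: 0 :: 0 :: 0 :: 0 :: 0 :: 0 :: 0 :: 0 :: 0 :: 0 :: 0 :: 0 :: 0 :: 0 :: (-1) :: nil)%Z) ::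
  (15127814392072947%positive, (0 :: 0 :: 0 :: 0 :: 0 :: 0 :: 0 :: 0 :: 0 :: 1 :: 0 :: 0 :: 0 :: 0 :: 0 :: 0 :: 0 :: 0 :: 0 :: 0 :: 0 :: 0 :: 0 :: 0 :: 0 :: nil)%Z) ::
  (18424769758760%positive, (0 :: 0 :: 0 :: 0 :: 0 :: 0 :: 0 :: 0 :: 0 :: 0 :: 1 :: 1 :: 0 :: 0 :: 0 :: 0 :: 0 :: 0 :: 0 :: 0 :: 0 :: 0 :: 0 :: 0 :: 0 :: nil)%Z) ::
  (1329489338917%positive, (0 :: 0 :: 0 :: 0 :: 0 :: 0 :: 0 :: 0 :: 0 :: 0 :: 1 :: 0 :: 1 :: 0 :: 0 :: 0 :: 0 :: 0 :: 0 :: 0 :: 0 :: 0 :: 0 :: 0 :: 0 :: nil)%Z) ::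
  (20967516209448%positive, (0 :: 0 :: 0 :: 0 :: 0 :: 0 :: 0 :: 0 :: 0 :: 0 :: 1 :: 0 :: 0 :: (-1) :: 0 :: 0 :: 0 :: 0 :: 0 :: 0 :: 0 :: 0 :: 0 :: 0 :: 0 :: nil)%Z) ::
  (164307859551702%positive, (0 :: 0 :: 0 :: 0 :: 0 :: 0 :: 0 :: 0 :: 0 :: 0 :: 1 :: 0 :: 0 :: 0 :: 1 :: 0 :: 0 :: 0 :: 0 :: 0 :: 0 :: 0 :: 0 :: 0 :: 0 :: nil)%Z) ::
  (117360054148439%positive, (0 :: 0 :: 0 :: 0 :: 0 :: 0 :: 0 :: 0 :: 0 :: 0 :: 1 :: 0 :: 0 :: 0 :: 0 :: (-1) :: 0 :: 0 :: 0 :: 0 :: 0 :: 0 :: 0 :: 0 :: 0 :: nil)%Z) ::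
  (72481826758449%positive, (0 :: 0 :: 0 :: 0 :: 0 :: 0 :: 0 :: 0 :: 0 :: 0 :: 1 :: 0 :: 0 :: 0 :: 0 :: 0 :: 1 :: 0 :: 0 :: 0 :: 0 :: 0 :: 0 :: 0 :: 0 :: nil)%Z) ::
  (101408684404105%positive, (0 :: 0 :: 0 :: 0 :: 0 :: 0 :: 0 :: 0 :: 0 :: 0 :: 1 :: 0 :: 0 :: 0 :: 0 :: 0 :: 0 :: (-1) :: 0 :: 0 :: 0 :: 0 :: 0 :: 0 :: 0 :: nil)%Z) ::
  (101031207011626%positive, (0 :: 0 :: 0 :: 0 :: 0 :: 0 :: 0 :: 0 :: 0 :: 0 :: 1 :: 0 :: 0 :: 0 :: 0 :: 0 :: 0 :: 0 :: 1 :: 0 :: 0 :: 0 :: 0 :: 0 :: 0 :: nil)%Z) ::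
  (170448060345746%positive, (0 :: 0 :: 0 :: 0 :: 0 :: 0 :: 0 :: 0 :: 0 :: 0 :: 1 :: 0 :: 0 :: 0 :: 0 :: 0 :: 0 :: 0 :: 0 :: 1 :: 0 :: 0 :: 0 :: 0 :: 0 :: nil)%Z) ::
  (71355987206566%positive, (0 :: 0 :: 0 :: 0 :: 0 :: 0 :: 0 :: 0 :: 0 :: 0 :: 1 :: 0 :: 0 :: 0 :: 0 :: 0 :: 0 :: 0 :: 0 :: 0 :: 1 :: 0 :: 0 :: 0 :: 0 :: nil)%Z) ::
  (19825415466191%positive, (0 :: 0 :: 0 :: 0 :: 0 :: 0 :: 0 :: 0 :: 0 :: 0 :: 1 :: 0 :: 0 :: 0 :: 0 :: 0 :: 0 :: 0 :: 0 :: 0 :: 0 :: 1 :: 0 :: 0 :: 0 :: nil)%Z) ::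
  (55342764825738%positive, (0 :: 0 :: 0 :: 0 :: 0 :: 0 :: 0 :: 0 :: 0 :: 0 :: 1 :: 0 :: 0 :: 0 :: 0 :: 0 :: 0 :: 0 :: 0 :: 0 :: 0 :: 0 :: 1 :: 0 :: 0 :: nil)%Z) ::
  (115229351633365%positive, (0 :: 0 :: 0 :: 0 :: 0 :: 0 :: 0 :: 0 :: 0 :: 0 :: 1 :: 0 :: 0 :: 0 :: 0 :: 0 :: 0 :: 0 :: 0 :: 0 :: 0 :: 0 :: 0 :: (-1) :: 0 :: nil)%Z) ::
  (43556482167907%positive, (0 :: 0 :: 0 :: 0 :: 0 :: 0 :: 0 :: 0 :: 0 :: 0 :: 1 :: 0 :: 0 :: 0 :: 0 :: 0 :: 0 :: 0 :: 0 :: 0 :: 0 :: 0 :: 0 :: 0 :: (-1) :: nil)%Z) ::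
  (16030418194499552%positive, (0 :: 0 :: 0 :: 0 :: 0 :: 0 :: 0 :: 0 :: 0 :: 0 :: 1 :: 0 :: 0 :: 0 :: 0 :: 0 :: 0 :: 0 :: 0 :: 0 :: 0 :: 0 :: 0 :: 0 :: 0 :: nil)%Z) ::
  (27829008843895%positive, (0 :: 0 :: 0 :: 0 :: 0 :: 0 :: 0 :: 0 :: 0 :: 0 :: 0 :: 1 :: (-1) :: 0 :: 0 :: 0 :: 0 :: 0 :: 0 :: 0 :: 0 :: 0 :: 0 :: 0 :: 0 :: nil)%Z) ::
  (27841837401169%positive, (0 :: 0 :: 0 :: 0 :: 0 :: 0 :: 0 :: 0 :: 0 :: 0 :: 0 :: 1 :: 0 :: 1 :: 0 :: 0 :: 0 :: 0 :: 0 :: 0 :: 0 :: 0 :: 0 :: 0 :: 0 :: nil)%Z) ::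
  (93406762179543%positive, (0 :: 0 :: 0 :: 0 :: 0 :: 0 :: 0 :: 0 :: 0 :: 0 :: 0 :: 1 :: 0 :: 0 :: (-1) :: 0 :: 0 :: 0 :: 0 :: 0 :: 0 :: 0 :: 0 :: 0 :: 0 :: nil)%Z) ::
  (49457041587313%positive, (0 :: 0 :: 0 :: 0 :: 0 :: 0 :: 0 :: 0 :: 0 :: 0 :: 0 :: 1 :: 0 :: 0 :: 0 :: (-1) :: 0 :: 0 :: 0 :: 0 :: 0 :: 0 :: 0 :: 0 :: 0 :: nil)%Z) ::
  (5740455614576%positive, (0 :: 0 :: 0 :: 0 :: 0 :: 0 :: 0 :: 0 :: 0 :: 0 :: 0 :: 1 :: 0 :: 0 :: 0 :: 0 :: 1 :: 0 :: 0 :: 0 :: 0 :: 0 :: 0 :: 0 :: 0 :: nil)%Z) ::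
  (28052704183422%positive, (0 :: 0 :: 0 :: 0 :: 0 :: 0 :: 0 :: 0 :: 0 :: 0 :: 0 :: 1 :: 0 :: 0 :: 0 :: 0 :: 0 :: (-1) :: 0 :: 0 :: 0 :: 0 :: 0 :: 0 :: 0 :: nil)%Z) ::
  (37936250789940%positive, (0 :: 0 :: 0 :: 0 :: 0 :: 0 :: 0 :: 0 :: 0 :: 0 :: 0 :: 1 :: 0 :: 0 :: 0 :: 0 :: 0 :: 0 :: 1 :: 0 :: 0 :: 0 :: 0 :: 0 :: 0 :: nil)%Z) ::
  (60500361754399%positive, (0 :: 0 :: 0 :: 0 :: 0 :: 0 :: 0 :: 0 :: 0 :: 0 :: 0 :: 1 :: 0 :: 0 :: 0 :: 0 :: 0 :: 0 :: 0 :: 1 :: 0 :: 0 :: 0 :: 0 :: 0 :: nil)%Z) ::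
  (40754010263781%positive, (0 :: 0 :: 0 :: 0 :: 0 :: 0 :: 0 :: 0 :: 0 :: 0 :: 0 :: 1 :: 0 :: 0 :: 0 :: 0 :: 0 :: 0 :: 0 :: 0 :: 1 :: 0 :: 0 :: 0 :: 0 :: nil)%Z) ::
  (8026465562507%positive, (0 :: 0 :: 0 :: 0 :: 0 :: 0 :: 0 :: 0 :: 0 :: 0 :: 0 :: 1 :: 0 :: 0 :: 0 :: 0 :: 0 :: 0 :: 0 :: 0 :: 0 :: (-1) :: 0 :: 0 :: 0 :: nil)%Z) ::
  (15379093852063%positive, (0 :: 0 :: 0 :: 0 :: 0 :: 0 :: 0 :: 0 :: 0 :: 0 :: 0 :: 1 :: 0 :: 0 :: 0 :: 0 :: 0 :: 0 :: 0 :: 0 :: 0 :: 0 :: (-1) :: 0 :: 0 :: nil)%Z) ::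
  (32460051338458%positive, (0 :: 0 :: 0 :: 0 :: 0 :: 0 :: 0 :: 0 :: 0 :: 0 :: 0 :: 1 :: 0 :: 0 :: 0 :: 0 :: 0 :: 0 :: 0 :: 0 :: 0 :: 0 :: 0 :: 1 :: 0 :: nil)%Z) ::
  (15485513291761%positive, (0 :: 0 :: 0 :: 0 :: 0 :: 0 :: 0 :: 0 :: 0 :: 0 :: 0 :: 1 :: 0 :: 0 :: 0 :: 0 :: 0 :: 0 :: 0 :: 0 :: 0 :: 0 :: 0 :: 0 :: 1 :: nil)%Z) ::
  (16597457495610496%positive, (0 :: 0 :: 0 :: 0 :: 0 :: 0 :: 0 :: 0 :: 0 :: 0 :: 0 :: 1 :: 0 :: 0 :: 0 :: 0 :: 0 :: 0 :: 0 :: 0 :: 0 :: 0 :: 0 :: 0 :: 0 :: nil)%Z) ::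
  (854939277241%positive, (0 :: 0 :: 0 :: 0 :: 0 :: 0 :: 0 :: 0 :: 0 :: 0 :: 0 :: 0 :: 1 :: 1 :: 0 :: 0 :: 0 :: 0 :: 0 :: 0 :: 0 :: 0 :: 0 :: 0 :: 0 :: nil)%Z) ::
  (27299172873690%positive, (0 :: 0 :: 0 :: 0 :: 0 :: 0 :: 0 :: 0 :: 0 :: 0 :: 0 :: 0 :: 1 :: 0 :: 1 :: 0 :: 0 :: 0 :: 0 :: 0 :: 0 :: 0 :: 0 :: 0 :: 0 :: nil)%Z) ::
  (23270456370253%positive, (0 :: 0 :: 0 :: 0 :: 0 :: 0 :: 0 :: 0 :: 0 :: 0 :: 0 :: 0 :: 1 :: 0 :: 0 :: 1 :: 0 :: 0 :: 0 :: 0 :: 0 :: 0 :: 0 :: 0 :: 0 :: nil)%Z) ::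
  (7494857838628%positive, (0 :: 0 :: 0 :: 0 :: 0 :: 0 :: 0 :: 0 :: 0 :: 0 :: 0 :: 0 :: 1 :: 0 :: 0 :: 0 :: (-1) :: 0 :: 0 :: 0 :: 0 :: 0 :: 0 :: 0 :: 0 :: nil)%Z) ::
  (1843564976425%positive, (0 :: 0 :: 0 :: 0 :: 0 :: 0 :: 0 :: 0 :: 0 :: 0 :: 0 :: 0 :: 1 :: 0 :: 0 :: 0 :: 0 :: 1 :: 0 :: 0 :: 0 :: 0 :: 0 :: 0 :: 0 :: nil)%Z) ::
  (3929663870333%positive, (0 :: 0 :: 0 :: 0 :: 0 :: 0 :: 0 :: 0 :: 0 :: 0 :: 0 :: 0 :: 1 :: 0 :: 0 :: 0 :: 0 :: 0 :: (-1) :: 0 :: 0 :: 0 :: 0 :: 0 :: 0 :: nil)%Z) ::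
  (65434703041385%positive, (0 :: 0 :: 0 :: 0 :: 0 :: 0 :: 0 :: 0 :: 0 :: 0 :: 0 :: 0 :: 1 :: 0 :: 0 :: 0 :: 0 :: 0 :: 0 :: (-1) :: 0 :: 0 :: 0 :: 0 :: 0 :: nil)%Z) ::
  (407465809919%positive, (0 :: 0 :: 0 :: 0 :: 0 :: 0 :: 0 :: 0 :: 0 :: 0 :: 0 :: 0 :: 1 :: 0 :: 0 :: 0 :: 0 :: 0 :: 0 :: 0 :: 1 :: 0 :: 0 :: 0 :: 0 :: nil)%Z) ::
  (102889643367%positive, (0 :: 0 :: 0 :: 0 :: 0 :: 0 :: 0 :: 0 :: 0 :: 0 :: 0 :: 0 :: 1 :: 0 :: 0 :: 0 :: 0 :: 0 :: 0 :: 0 :: 0 :: 1 :: 0 :: 0 :: 0 :: nil)%Z) ::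
  (14112636412320%positive, (0 :: 0 :: 0 :: 0 :: 0 :: 0 :: 0 :: 0 :: 0 :: 0 :: 0 :: 0 :: 1 :: 0 :: 0 :: 0 :: 0 :: 0 :: 0 :: 0 :: 0 :: 0 :: (-1) :: 0 :: 0 :: nil)%Z) ::
  (2104314079787%positive, (0 :: 0 :: 0 :: 0 :: 0 :: 0 :: 0 :: 0 :: 0 :: 0 :: 0 :: 0 :: 1 :: 0 :: 0 :: 0 :: 0 :: 0 :: 0 :: 0 :: 0 :: 0 :: 0 :: (-1) :: 0 :: nil)%Z) ::
  (4587135521405%positive, (0 :: 0 :: 0 :: 0 :: 0 :: 0 :: 0 :: 0 :: 0 :: 0 :: 0 :: 0 :: 1 :: 0 :: 0 :: 0 :: 0 :: 0 :: 0 :: 0 :: 0 :: 0 :: 0 :: 0 :: 1 :: nil)%Z) ::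
  (16902817150740849%positive, (0 :: 0 :: 0 :: 0 :: 0 :: 0 :: 0 :: 0 :: 0 :: 0 :: 0 :: 0 :: 1 :: 0 :: 0 :: 0 :: 0 :: 0 :: 0 :: 0 :: 0 :: 0 :: 0 :: 0 :: 0 :: nil)%Z) ::
  (128493196253811%positive, (0 :: 0 :: 0 :: 0 :: 0 :: 0 :: 0 :: 0 :: 0 :: 0 :: 0 :: 0 :: 0 :: 1 :: (-1) :: 0 :: 0 :: 0 :: 0 :: 0 :: 0 :: 0 :: 0 :: 0 :: 0 :: nil)%Z) ::
  (64056988371980%positive, (0 :: 0 :: 0 :: 0 :: 0 :: 0 :: 0 :: 0 :: 0 :: 0 :: 0 :: 0 :: 0 :: 1 :: 0 :: (-1) :: 0 :: 0 :: 0 :: 0 :: 0 :: 0 :: 0 :: 0 :: 0 :: nil)%Z) ::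
  (6890694420949%positive, (0 :: 0 :: 0 :: 0 :: 0 :: 0 :: 0 :: 0 :: 0 :: 0 :: 0 :: 0 :: 0 :: 1 :: 0 :: 0 :: (-1) :: 0 :: 0 :: 0 :: 0 :: 0 :: 0 :: 0 :: 0 :: nil)%Z) ::
  (10233082640787%positive, (0 :: 0 :: 0 :: 0 :: 0 :: 0 :: 0 :: 0 :: 0 :: 0 :: 0 :: 0 :: 0 :: 1 :: 0 :: 0 :: 0 :: 1 :: 0 :: 0 :: 0 :: 0 :: 0 :: 0 :: 0 :: nil)%Z) ::
  (7074179757572%positive, (0 :: 0 :: 0 :: 0 :: 0 :: 0 :: 0 :: 0 :: 0 :: 0 :: 0 :: 0 :: 0 :: 1 :: 0 :: 0 :: 0 :: 0 :: 1 :: 0 :: 0 :: 0 :: 0 :: 0 :: 0 :: nil)%Z) ::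
  (11044110143871%positive, (0 :: 0 :: 0 :: 0 :: 0 :: 0 :: 0 :: 0 :: 0 :: 0 :: 0 :: 0 :: 0 :: 1 :: 0 :: 0 :: 0 :: 0 :: 0 :: 1 :: 0 :: 0 :: 0 :: 0 :: 0 :: nil)%Z) ::
  (693011945788%positive, (0 :: 0 :: 0 :: 0 :: 0 :: 0 :: 0 :: 0 :: 0 :: 0 :: 0 :: 0 :: 0 :: 1 :: 0 :: 0 :: 0 :: 0 :: 0 :: 0 :: (-1) :: 0 :: 0 :: 0 :: 0 :: nil)%Z) ::
  (9291775497603%positive, (0 :: 0 :: 0 :: 0 :: 0 :: 0 :: 0 :: 0 :: 0 :: 0 :: 0 :: 0 :: 0 :: 1 :: 0 :: 0 :: 0 :: 0 :: 0 :: 0 :: 0 :: (-1) :: 0 :: 0 :: 0 :: nil)%Z) ::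
  (19312907875831%positive, (0 :: 0 :: 0 :: 0 :: 0 :: 0 :: 0 :: 0 :: 0 :: 0 :: 0 :: 0 :: 0 :: 1 :: 0 :: 0 :: 0 :: 0 :: 0 :: 0 :: 0 :: 0 :: (-1) :: 0 :: 0 :: nil)%Z) ::
  (9662436098228%positive, (0 :: 0 :: 0 :: 0 :: 0 :: 0 :: 0 :: 0 :: 0 :: 0 :: 0 :: 0 :: 0 :: 1 :: 0 :: 0 :: 0 :: 0 :: 0 :: 0 :: 0 :: 0 :: 0 :: (-1) :: 0 :: nil)%Z) ::
  (21299886315981%positive, (0 :: 0 :: 0 :: 0 :: 0 :: 0 :: 0 :: 0 :: 0 :: 0 :: 0 :: 0 :: 0 :: 1 :: 0 :: 0 :: 0 :: 0 :: 0 :: 0 :: 0 :: 0 :: 0 :: 0 :: (-1) :: nil)%Z) ::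
  (16713186729947440%positive, (0 :: 0 :: 0 :: 0 :: 0 :: 0 :: 0 :: 0 :: 0 :: 0 :: 0 :: 0 :: 0 :: 1 :: 0 :: 0 :: 0 :: 0 :: 0 :: 0 :: 0 :: 0 :: 0 :: 0 :: 0 :: nil)%Z) ::
  (47976808238659%positive, (0 :: 0 :: 0 :: 0 :: 0 :: 0 :: 0 :: 0 :: 0 :: 0 :: 0 :: 0 :: 0 :: 0 :: 1 :: (-1) :: 0 :: 0 :: 0 :: 0 :: 0 :: 0 :: 0 :: 0 :: 0 :: nil)%Z) ::
  (149275998970708%positive, (0 :: 0 :: 0 :: 0 :: 0 :: 0 :: 0 :: 0 :: 0 :: 0 :: 0 :: 0 :: 0 :: 0 :: 1 :: 0 :: 1 :: 0 :: 0 :: 0 :: 0 :: 0 :: 0 :: 0 :: 0 :: nil)%Z) ::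
  (78546178679630%positive, (0 :: 0 :: 0 :: 0 :: 0 :: 0 :: 0 :: 0 :: 0 :: 0 :: 0 :: 0 :: 0 :: 0 :: 1 :: 0 :: 0 :: (-1) :: 0 :: 0 :: 0 :: 0 :: 0 :: 0 :: 0 :: nil)%Z) ::
  (26237718110887%positive, (0 :: 0 :: 0 :: 0 :: 0 :: 0 :: 0 :: 0 :: 0 :: 0 :: 0 :: 0 :: 0 :: 0 :: 1 :: 0 :: 0 :: 0 :: (-1) :: 0 :: 0 :: 0 :: 0 :: 0 :: 0 :: nil)%Z) ::
  (136076982277479%positive, (0 :: 0 :: 0 :: 0 :: 0 :: 0 :: 0 :: 0 :: 0 :: 0 :: 0 :: 0 :: 0 :: 0 :: 1 :: 0 :: 0 :: 0 :: 0 :: (-1) :: 0 :: 0 :: 0 :: 0 :: 0 :: nil)%Z) ::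
  (15947092176075%positive, (0 :: 0 :: 0 :: 0 :: 0 :: 0 :: 0 :: 0 :: 0 :: 0 :: 0 :: 0 :: 0 :: 0 :: 1 :: 0 :: 0 :: 0 :: 0 :: 0 :: (-1) :: 0 :: 0 :: 0 :: 0 :: nil)%Z) ::
  (70210624145759%positive, (0 :: 0 :: 0 :: 0 :: 0 :: 0 :: 0 :: 0 :: 0 :: 0 :: 0 :: 0 :: 0 :: 0 :: 1 :: 0 :: 0 :: 0 :: 0 :: 0 :: 0 :: (-1) :: 0 :: 0 :: 0 :: nil)%Z) ::
  (25872841000413%positive, (0 :: 0 :: 0 :: 0 :: 0 :: 0 :: 0 :: 0 :: 0 :: 0 :: 0 :: 0 :: 0 :: 0 :: 1 :: 0 :: 0 :: 0 :: 0 :: 0 :: 0 :: 0 :: (-1) :: 0 :: 0 :: nil)%Z) ::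
  (17368510803303%positive, (0 :: 0 :: 0 :: 0 :: 0 :: 0 :: 0 :: 0 :: 0 :: 0 :: 0 :: 0 :: 0 :: 0 :: 1 :: 0 :: 0 :: 0 :: 0 :: 0 :: 0 :: 0 :: 0 :: (-1) :: 0 :: nil)%Z) ::
  (3462232203557%positive, (0 :: 0 :: 0 :: 0 :: 0 :: 0 :: 0 :: 0 :: 0 :: 0 :: 0 :: 0 :: 0 :: 0 :: 1 :: 0 :: 0 :: 0 :: 0 :: 0 :: 0 :: 0 :: 0 :: 0 :: 1 :: nil)%Z) ::
  (15466255489872683%positive, (0 :: 0 :: 0 :: 0 :: 0 :: 0 :: 0 :: 0 :: 0 :: 0 :: 0 :: 0 :: 0 :: 0 :: 1 :: 0 :: 0 :: 0 :: 0 :: 0 :: 0 :: 0 :: 0 :: 0 :: 0 :: nil)%Z) ::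
  (63376399150948%positive, (0 :: 0 :: 0 :: 0 :: 0 :: 0 :: 0 :: 0 :: 0 :: 0 :: 0 :: 0 :: 0 :: 0 :: 0 :: 1 :: (-1) :: 0 :: 0 :: 0 :: 0 :: 0 :: 0 :: 0 :: 0 :: nil)%Z) ::
  (7482783752144%positive, (0 :: 0 :: 0 :: 0 :: 0 :: 0 :: 0 :: 0 :: 0 :: 0 :: 0 :: 0 :: 0 :: 0 :: 0 :: 1 :: 0 :: 1 :: 0 :: 0 :: 0 :: 0 :: 0 :: 0 :: 0 :: nil)%Z) ::
  (51790376206035%positive, (0 :: 0 :: 0 :: 0 :: 0 :: 0 :: 0 :: 0 :: 0 :: 0 :: 0 :: 0 :: 0 :: 0 :: 0 :: 1 :: 0 :: 0 :: (-1) :: 0 :: 0 :: 0 :: 0 :: 0 :: 0 :: nil)%Z) ::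
  (134525581224077%positive, (0 :: 0 :: 0 :: 0 :: 0 :: 0 :: 0 :: 0 :: 0 :: 0 :: 0 :: 0 :: 0 :: 0 :: 0 :: 1 :: 0 :: 0 :: 0 :: (-1) :: 0 :: 0 :: 0 :: 0 :: 0 :: nil)%Z) ::
  (65685253215955%positive, (0 :: 0 :: 0 :: 0 :: 0 :: 0 :: 0 :: 0 :: 0 :: 0 :: 0 :: 0 :: 0 :: 0 :: 0 :: 1 :: 0 :: 0 :: 0 :: 0 :: 1 :: 0 :: 0 :: 0 :: 0 :: nil)%Z) ::
  (40621914966354%positive, (0 :: 0 :: 0 :: 0 :: 0 :: 0 :: 0 :: 0 :: 0 :: 0 :: 0 :: 0 :: 0 :: 0 :: 0 :: 1 :: 0 :: 0 :: 0 :: 0 :: 0 :: (-1) :: 0 :: 0 :: 0 :: nil)%Z) ::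
  (44247965365721%positive, (0 :: 0 :: 0 :: 0 :: 0 :: 0 :: 0 :: 0 :: 0 :: 0 :: 0 :: 0 :: 0 :: 0 :: 0 :: 1 :: 0 :: 0 :: 0 :: 0 :: 0 :: 0 :: 1 :: 0 :: 0 :: nil)%Z) ::
  (22240557873080%positive, (0 :: 0 :: 0 :: 0 :: 0 :: 0 :: 0 :: 0 :: 0 :: 0 :: 0 :: 0 :: 0 :: 0 :: 0 :: 1 :: 0 :: 0 :: 0 :: 0 :: 0 :: 0 :: 0 :: 1 :: 0 :: nil)%Z) ::
  (5119936065041%positive, (0 :: 0 :: 0 :: 0 :: 0 :: 0 :: 0 :: 0 :: 0 :: 0 :: 0 :: 0 :: 0 :: 0 :: 0 :: 1 :: 0 :: 0 :: 0 :: 0 :: 0 :: 0 :: 0 :: 0 :: (-1) :: nil)%Z) ::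
  (16041871984652841%positive, (0 :: 0 :: 0 :: 0 :: 0 :: 0 :: 0 :: 0 :: 0 :: 0 :: 0 :: 0 :: 0 :: 0 :: 0 :: 1 :: 0 :: 0 :: 0 :: 0 :: 0 :: 0 :: 0 :: 0 :: 0 :: nil)%Z) ::
  (9178966155488%positive, (0 :: 0 :: 0 :: 0 :: 0 :: 0 :: 0 :: 0 :: 0 :: 0 :: 0 :: 0 :: 0 :: 0 :: 0 :: 0 :: 1 :: (-1) :: 0 :: 0 :: 0 :: 0 :: 0 :: 0 :: 0 :: nil)%Z) ::
  (19523383601%positive, (0 :: 0 :: 0 :: 0 :: 0 :: 0 :: 0 :: 0 :: 0 :: 0 :: 0 :: 0 :: 0 :: 0 :: 0 :: 0 :: 1 :: 0 :: 1 :: 0 :: 0 :: 0 :: 0 :: 0 :: 0 :: nil)%Z) ::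
  (103969901002268%positive, (0 :: 0 :: 0 :: 0 :: 0 :: 0 :: 0 :: 0 :: 0 :: 0 :: 0 :: 0 :: 0 :: 0 :: 0 :: 0 :: 1 :: 0 :: 0 :: 1 :: 0 :: 0 :: 0 :: 0 :: 0 :: nil)%Z) ::
  (10170206390132%positive, (0 :: 0 :: 0 :: 0 :: 0 :: 0 :: 0 :: 0 :: 0 :: 0 :: 0 :: 0 :: 0 :: 0 :: 0 :: 0 :: 1 :: 0 :: 0 :: 0 :: (-1) :: 0 :: 0 :: 0 :: 0 :: nil)%Z) ::
  (18090028939582%positive, (0 :: 0 :: 0 :: 0 :: 0 :: 0 :: 0 :: 0 :: 0 :: 0 :: 0 :: 0 :: 0 :: 0 :: 0 :: 0 :: 1 :: 0 :: 0 :: 0 :: 0 :: (-1) :: 0 :: 0 :: 0 :: nil)%Z) ::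
  (4412299613630%positive, (0 :: 0 :: 0 :: 0 :: 0 :: 0 :: 0 :: 0 :: 0 :: 0 :: 0 :: 0 :: 0 :: 0 :: 0 :: 0 :: 1 :: 0 :: 0 :: 0 :: 0 :: 0 :: (-1) :: 0 :: 0 :: nil)%Z) ::
  (7659433694767%positive, (0 :: 0 :: 0 :: 0 :: 0 :: 0 :: 0 :: 0 :: 0 :: 0 :: 0 :: 0 :: 0 :: 0 :: 0 :: 0 :: 1 :: 0 :: 0 :: 0 :: 0 :: 0 :: 0 :: (-1) :: 0 :: nil)%Z) ::
  (8993645423812%positive, (0 :: 0 :: 0 :: 0 :: 0 :: 0 :: 0 :: 0 :: 0 :: 0 :: 0 :: 0 :: 0 :: 0 :: 0 :: 0 :: 1 :: 0 :: 0 :: 0 :: 0 :: 0 :: 0 :: 0 :: (-1) :: nil)%Z) ::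
  (16551079653230897%positive, (0 :: 0 :: 0 :: 0 :: 0 :: 0 :: 0 :: 0 :: 0 :: 0 :: 0 :: 0 :: 0 :: 0 :: 0 :: 0 :: 1 :: 0 :: 0 :: 0 :: 0 :: 0 :: 0 :: 0 :: 0 :: nil)%Z) ::
  (693582049176%positive, (0 :: 0 :: 0 :: 0 :: 0 :: 0 :: 0 :: 0 :: 0 :: 0 :: 0 :: 0 :: 0 :: 0 :: 0 :: 0 :: 0 :: 1 :: (-1) :: 0 :: 0 :: 0 :: 0 :: 0 :: 0 :: nil)%Z) ::
  (96581122399350%positive, (0 :: 0 :: 0 :: 0 :: 0 :: 0 :: 0 :: 0 :: 0 :: 0 :: 0 :: 0 :: 0 :: 0 :: 0 :: 0 :: 0 :: 1 :: 0 :: (-1) :: 0 :: 0 :: 0 :: 0 :: 0 :: nil)%Z) ::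
  (24267996027105%positive, (0 :: 0 :: 0 :: 0 :: 0 :: 0 :: 0 :: 0 :: 0 :: 0 :: 0 :: 0 :: 0 :: 0 :: 0 :: 0 :: 0 :: 1 :: 0 :: 0 :: 1 :: 0 :: 0 :: 0 :: 0 :: nil)%Z) ::
  (277994610156%positive, (0 :: 0 :: 0 :: 0 :: 0 :: 0 :: 0 :: 0 :: 0 :: 0 :: 0 :: 0 :: 0 :: 0 :: 0 :: 0 :: 0 :: 1 :: 0 :: 0 :: 0 :: 1 :: 0 :: 0 :: 0 :: nil)%Z) ::
  (6343672306270%positive, (0 :: 0 :: 0 :: 0 :: 0 :: 0 :: 0 :: 0 :: 0 :: 0 :: 0 :: 0 :: 0 :: 0 :: 0 :: 0 :: 0 :: 1 :: 0 :: 0 :: 0 :: 0 :: (-1) :: 0 :: 0 :: nil)%Z) ::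
  (1479542094639%positive, (0 :: 0 :: 0 :: 0 :: 0 :: 0 :: 0 :: 0 :: 0 :: 0 :: 0 :: 0 :: 0 :: 0 :: 0 :: 0 :: 0 :: 1 :: 0 :: 0 :: 0 :: 0 :: 0 :: (-1) :: 0 :: nil)%Z) ::
  (3558392819729%positive, (0 :: 0 :: 0 :: 0 :: 0 :: 0 :: 0 :: 0 :: 0 :: 0 :: 0 :: 0 :: 0 :: 0 :: 0 :: 0 :: 0 :: 1 :: 0 :: 0 :: 0 :: 0 :: 0 :: 0 :: 1 :: nil)%Z) ::
  (16544940494470292%positive, (0 :: 0 :: 0 :: 0 :: 0 :: 0 :: 0 :: 0 :: 0 :: 0 :: 0 :: 0 :: 0 :: 0 :: 0 :: 0 :: 0 :: 1 :: 0 :: 0 :: 0 :: 0 :: 0 :: 0 :: 0 :: nil)%Z) ::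
  (117501439611730%positive, (0 :: 0 :: 0 :: 0 :: 0 :: 0 :: 0 :: 0 :: 0 :: 0 :: 0 :: 0 :: 0 :: 0 :: 0 :: 0 :: 0 :: 0 :: 1 :: 1 :: 0 :: 0 :: 0 :: 0 :: 0 :: nil)%Z) ::
  (23362725737797%positive, (0 :: 0 :: 0 :: 0 :: 0 :: 0 :: 0 :: 0 :: 0 :: 0 :: 0 :: 0 :: 0 :: 0 :: 0 :: 0 :: 0 :: 0 :: 1 :: 0 :: (-1) :: 0 :: 0 :: 0 :: 0 :: nil)%Z) ::
  (1457916613102%positive, (0 :: 0 :: 0 :: 0 :: 0 :: 0 :: 0 :: 0 :: 0 :: 0 :: 0 :: 0 :: 0 :: 0 :: 0 :: 0 :: 0 :: 0 :: 1 :: 0 :: 0 :: (-1) :: 0 :: 0 :: 0 :: nil)%Z) ::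
  (13763053360256%positive, (0 :: 0 :: 0 :: 0 :: 0 :: 0 :: 0 :: 0 :: 0 :: 0 :: 0 :: 0 :: 0 :: 0 :: 0 :: 0 :: 0 :: 0 :: 1 :: 0 :: 0 :: 0 :: 1 :: 0 :: 0 :: nil)%Z) ::
  (6839178459852%positive, (0 :: 0 :: 0 :: 0 :: 0 :: 0 :: 0 :: 0 :: 0 :: 0 :: 0 :: 0 :: 0 :: 0 :: 0 :: 0 :: 0 :: 0 :: 1 :: 0 :: 0 :: 0 :: 0 :: 1 :: 0 :: nil)%Z) ::
  (7397362851034%positive, (0 :: 0 :: 0 :: 0 :: 0 :: 0 :: 0 :: 0 :: 0 :: 0 :: 0 :: 0 :: 0 :: 0 :: 0 :: 0 :: 0 :: 0 :: 1 :: 0 :: 0 :: 0 :: 0 :: 0 :: (-1) :: nil)%Z) ::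
  (16486068676698254%positive, (0 :: 0 :: 0 :: 0 :: 0 :: 0 :: 0 :: 0 :: 0 :: 0 :: 0 :: 0 :: 0 :: 0 :: 0 :: 0 :: 0 :: 0 :: 1 :: 0 :: 0 :: 0 :: 0 :: 0 :: 0 :: nil)%Z) ::
  (8359836104928%positive, (0 :: 0 :: 0 :: 0 :: 0 :: 0 :: 0 :: 0 :: 0 :: 0 :: 0 :: 0 :: 0 :: 0 :: 0 :: 0 :: 0 :: 0 :: 0 :: 1 :: 1 :: 0 :: 0 :: 0 :: 0 :: nil)%Z) ::
  (2453034464143%positive, (0 :: 0 :: 0 :: 0 :: 0 :: 0 :: 0 :: 0 :: 0 :: 0 :: 0 :: 0 :: 0 :: 0 :: 0 :: 0 :: 0 :: 0 :: 0 :: 1 :: 0 :: 1 :: 0 :: 0 :: 0 :: nil)%Z) ::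
  (46804782282399%positive, (0 :: 0 :: 0 :: 0 :: 0 :: 0 :: 0 :: 0 :: 0 :: 0 :: 0 :: 0 :: 0 :: 0 :: 0 :: 0 :: 0 :: 0 :: 0 :: 1 :: 0 :: 0 :: (-1) :: 0 :: 0 :: nil)%Z) ::
  (65758856509927%positive, (0 :: 0 :: 0 :: 0 :: 0 :: 0 :: 0 :: 0 :: 0 :: 0 :: 0 :: 0 :: 0 :: 0 :: 0 :: 0 :: 0 :: 0 :: 0 :: 1 :: 0 :: 0 :: 0 :: 1 :: 0 :: nil)%Z) ::
  (10000539563074%positive, (0 :: 0 :: 0 :: 0 :: 0 :: 0 :: 0 :: 0 :: 0 :: 0 :: 0 :: 0 :: 0 :: 0 :: 0 :: 0 :: 0 :: 0 :: 0 :: 1 :: 0 :: 0 :: 0 :: 0 :: 1 :: nil)%Z) ::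
  (15970256335864670%positive, (0 :: 0 :: 0 :: 0 :: 0 :: 0 :: 0 :: 0 :: 0 :: 0 :: 0 :: 0 :: 0 :: 0 :: 0 :: 0 :: 0 :: 0 :: 0 :: 1 :: 0 :: 0 :: 0 :: 0 :: 0 :: nil)%Z) ::
  (696610797322%positive, (0 :: 0 :: 0 :: 0 :: 0 :: 0 :: 0 :: 0 :: 0 :: 0 :: 0 :: 0 :: 0 :: 0 :: 0 :: 0 :: 0 :: 0 :: 0 :: 0 :: 1 :: 1 :: 0 :: 0 :: 0 :: nil)%Z) ::
  (32738732152300%positive, (0 :: 0 :: 0 :: 0 :: 0 :: 0 :: 0 :: 0 :: 0 :: 0 :: 0 :: 0 :: 0 :: 0 :: 0 :: 0 :: 0 :: 0 :: 0 :: 0 :: 1 :: 0 :: (-1) :: 0 :: 0 :: nil)%Z) ::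
  (47484441730259%positive, (0 :: 0 :: 0 :: 0 :: 0 :: 0 :: 0 :: 0 :: 0 :: 0 :: 0 :: 0 :: 0 :: 0 :: 0 :: 0 :: 0 :: 0 :: 0 :: 0 :: 1 :: 0 :: 0 :: 1 :: 0 :: nil)%Z) ::
  (24053187983346%positive, (0 :: 0 :: 0 :: 0 :: 0 :: 0 :: 0 :: 0 :: 0 :: 0 :: 0 :: 0 :: 0 :: 0 :: 0 :: 0 :: 0 :: 0 :: 0 :: 0 :: 1 :: 0 :: 0 :: 0 :: 1 :: nil)%Z) ::
  (16521045856976791%positive, (0 :: 0 :: 0 :: 0 :: 0 :: 0 :: 0 :: 0 :: 0 :: 0 :: 0 :: 0 :: 0 :: 0 :: 0 :: 0 :: 0 :: 0 :: 0 :: 0 :: 1 :: 0 :: 0 :: 0 :: 0 :: nil)%Z) ::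
  (6659771921041%positive, (0 :: 0 :: 0 :: 0 :: 0 :: 0 :: 0 :: 0 :: 0 :: 0 :: 0 :: 0 :: 0 :: 0 :: 0 :: 0 :: 0 :: 0 :: 0 :: 0 :: 0 :: 1 :: 1 :: 0 :: 0 :: nil)%Z) ::
  (6281221409371%positive, (0 :: 0 :: 0 :: 0 :: 0 :: 0 :: 0 :: 0 :: 0 :: 0 :: 0 :: 0 :: 0 :: 0 :: 0 :: 0 :: 0 :: 0 :: 0 :: 0 :: 0 :: 1 :: 0 :: 1 :: 0 :: nil)%Z) ::
  (517183946279%positive, (0 :: 0 :: 0 :: 0 :: 0 :: 0 :: 0 :: 0 :: 0 :: 0 :: 0 :: 0 :: 0 :: 0 :: 0 :: 0 :: 0 :: 0 :: 0 :: 0 :: 0 :: 1 :: 0 :: 0 :: (-1) :: nil)%Z) ::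
  (16869448590226831%positive, (0 :: 0 :: 0 :: 0 :: 0 :: 0 :: 0 :: 0 :: 0 :: 0 :: 0 :: 0 :: 0 :: 0 :: 0 :: 0 :: 0 :: 0 :: 0 :: 0 :: 0 :: 1 :: 0 :: 0 :: 0 :: nil)%Z) ::
  (17780259134836%positive, (0 :: 0 :: 0 :: 0 :: 0 :: 0 :: 0 :: 0 :: 0 :: 0 :: 0 :: 0 :: 0 :: 0 :: 0 :: 0 :: 0 :: 0 :: 0 :: 0 :: 0 :: 0 :: 1 :: 1 :: 0 :: nil)%Z) ::
  (12686618409209%positive, (0 :: 0 :: 0 :: 0 :: 0 :: 0 :: 0 :: 0 :: 0 :: 0 :: 0 :: 0 :: 0 :: 0 :: 0 :: 0 :: 0 :: 0 :: 0 :: 0 :: 0 :: 0 :: 1 :: 0 :: 1 :: nil)%Z) ::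
  (16745662998186250%positive, (0 :: 0 :: 0 :: 0 :: 0 :: 0 :: 0 :: 0 :: 0 :: 0 :: 0 :: 0 :: 0 :: 0 :: 0 :: 0 :: 0 :: 0 :: 0 :: 0 :: 0 :: 0 :: 1 :: 0 :: 0 :: nil)%Z) ::
  (3489912298470%positive, (0 :: 0 :: 0 :: 0 :: 0 :: 0 :: 0 :: 0 :: 0 :: 0 :: 0 :: 0 :: 0 :: 0 :: 0 :: 0 :: 0 :: 0 :: 0 :: 0 :: 0 :: 0 :: 0 :: 1 :: 1 :: nil)%Z) ::
  (16634995049071783%positive, (0 :: 0 :: 0 :: 0 :: 0 :: 0 :: 0 :: 0 :: 0 :: 0 :: 0 :: 0 :: 0 :: 0 :: 0 :: 0 :: 0 :: 0 :: 0 :: 0 :: 0 :: 0 :: 0 :: 1 :: 0 :: nil)%Z) ::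
  (16849541383748435%positive, (0 :: 0 :: 0 :: 0 :: 0 :: 0 :: 0 :: 0 :: 0 :: 0 :: 0 :: 0 :: 0 :: 0 :: 0 :: 0 :: 0 :: 0 :: 0 :: 0 :: 0 :: 0 :: 0 :: 0 :: 1 :: nil)%Z) :: nil.
Definition qf1 (v0 v1 v2 v3 v4 v5 v6 v7 v8 v9 v10 v11 v12 v13 v14 v15 v16 v17 v18 v19 v20 v21 v22 v23 v24 : R) : R := 128 * v0 * v0 + (-82) * v0 * v2 + 86 * v0 * v4 + 10 * v0 * v5 + (-18) * v0 * v6 + (-10) * v0 * v7 + (-494) * v0 * v8 + (-94) * v0 * v9 + 84 * v0 * v10 + (-2) * v0 * v11 + 2 * v0 * v12 + (-6) * v0 * v13 + (-136) * v0 * v14 + 8 * v0 * v15 + 2 * v0 * v16 + 4 * v0 * v17 + 48 * v0 * v18 + 228 * v0 * v19 + 22 * v0 * v20 + 2 * v0 * v21 + 12 * v0 * v22 + 8 * v0 * v23 + (-24) * v0 * v24 + 338 * v1 * v1 + (-22) * v1 * v3 + 10 * v1 * v4 + 200 * v1 * v5 + 78 * v1 * v6 + 2 * v1 * v7 + (-22) * v1 * v8 + (-1880) * v1 * v9 + 118 * v1 * v10 + (-28) * v1 * v11 + (-2) * v1 * v12 + 18 * v1 * v13 + (-310) * v1 * v14 + (-218) * v1 * v15 + (-58) * v1 * v16 + (-2) * v1 * v18 + 598 * v1 * v19 + 2 * v1 * v20 + (-10) * v1 * v21 + 122 * v1 * v22 + 8 * v1 * v23 + (-4) * v1 * v24 +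 128 * v2 * v2 + 12 * v2 * v3 + (-54) * v2 * v4 + (-4) * v2 * v5 + 62 * v2 * v6 + 32 * v2 * v7 + 140 * v2 * v8 + 174 * v2 * v9 + (-702) * v2 * v10 + (-66) * v2 * v11 + (-4) * v2 * v12 + 10 * v2 * v13 + 74 * v2 * v14 + (-174) * v2 * v15 + (-36) * v2 * v16 + (-12) * v2 * v17 + (-2) * v2 * v18 + (-102) * v2 * v19 + 170 * v2 * v20 + 26 * v2 * v21 + (-16) * v2 * v22 + 22 * v2 * v23 + 2 * v2 * v24 + 1006 * v3 * v3 + (-12) * v3 * v4 + (-1180) * v3 * v5 + 60 * v3 * v6 + 26 * v3 * v7 + 6 * v3 * v8 + 636 * v3 * v9 + (-294) * v3 * v10 + (-78) * v3 * v11 + 2 * v3 * v12 + (-1178) * v3 * v13 + (-860) * v3 * v14 + 400 * v3 * v15 + (-76) * v3 * v16 + (-12) * v3 * v17 + (-2) * v3 * v18 + (-312) * v3 * v19 + 12 * v3 * v20 + 14 * v3 * v21 + 560 * v3 * v22 + 40 * v3 * v23 + (-4) * v3 * v24 + 3764 * v4 * v4 + (-590) * v4 * v5 + (-948) * v4 * v6 + (-14) * v4 * v7 + (-262) * v4 * v8 + 872 * v4 * v9 + 1558 * v4 * v10 + (-206) * v4 * v11 + 4 * v4 * v12 + (-46) * v4 * v13 + (-7490) * v4 * v14 + 954 * v4 * v15 + 388 * v4 * v16 + 4 * v4 * v17 + 50 * v4 * v18 + (-1228) * v4 * v19 + (-666) * v4 * v20 + 32 * v4 * v21 + 710 * v4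 * v22 + (-50) * v4 * v23 + 102 * v4 * v24 + 2234 * v5 * v5 + (-14) * v5 * v6 + (-92) * v5 * v7 + (-94) * v5 * v8 + (-1050) * v5 * v9 + 1088 * v5 * v10 + 534 * v5 * v11 + 24 * v5 * v12 + 538 * v5 * v13 + 1292 * v5 * v14 + (-3882) * v5 * v15 + (-136) * v5 * v16 + 28 * v5 * v17 + 14 * v5 * v18 + 472 * v5 * v19 + (-622) * v5 * v20 + (-134) * v5 * v21 + (-236) * v5 * v22 + 162 * v5 * v23 + 272 * v6 * v6 + 16 * v6 * v7 + 64 * v6 * v8 + (-344) * v6 * v9 + (-472) * v6 * v10 + 206 * v6 * v11 + (-24) * v6 * v13 + 580 * v6 * v14 + (-222) * v6 * v15 + (-230) * v6 * v16 + (-4) * v6 * v17 + (-18) * v6 * v18 + 66 * v6 * v19 + 268 * v6 * v20 + (-40) * v6 * v21 + (-18) * v6 * v22 + 34 * v6 * v23 + 6 * v6 * v24 + 8 * v7 * v7 + 8 * v7 * v8 + 34 * v7 * v9 + (-90) * v7 * v10 + (-32) * v7 * v11 + (-10) * v7 * v13 + 6 * v7 * v14 + 28 * v7 * v15 + (-6) * v7 * v16 + (-6) * v7 * v17 + 4 * v7 * v18 + (-12) * v7 * v19 + 24 * v7 * v20 + 12 * v7 * v21 + 2 * v7 * v23 + (-2) * v7 * v24 + 1898 * v8 * v8 + 168 * v8 * v9 + (-2164) * v8 * v10 + 228 * v8 * v11 + 54 * v8 * v12 + 2 * v8 * v13 + 1126 * v8 * v14 + (-234) * v8 * v15 + (-166)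 * v8 * v16 + 6 * v8 * v17 + (-484) * v8 * v18 + (-1764) * v8 * v19 + 120 * v8 * v20 + (-38) * v8 * v21 + (-102) * v8 * v22 + (-56) * v8 * v23 + 240 * v8 * v24 + 9554 * v9 * v9 + (-2980) * v9 * v10 + (-2014) * v9 * v11 + (-20) * v9 * v12 + (-492) * v9 * v13 + 1668 * v9 * v14 + 2982 * v9 * v15 + (-98) * v9 * v16 + (-8) * v9 * v17 + (-24) * v9 * v18 + (-7120) * v9 * v19 + 834 * v9 * v20 + 222 * v9 * v21 + (-1058) * v9 * v22 + (-248) * v9 * v23 + 114 * v9 * v24 + 5952 * v10 * v10 + 182 * v10 * v11 + (-188) * v10 * v12 + 86 * v10 * v13 + (-2408) * v10 * v14 + 1108 * v10 * v15 + 1072 * v10 * v16 + 52 * v10 * v17 + 142 * v10 * v18 + 1782 * v10 * v19 + (-3468) * v10 * v20 + (-192) * v10 * v21 + 268 * v10 * v22 + (-262) * v10 * v23 + (-50) * v10 * v24 + 778 * v11 * v11 + 42 * v11 * v12 + 54 * v11 * v13 + 90 * v11 * v14 + (-1368) * v11 * v15 + 148 * v11 * v16 + 10 * v11 * v17 + (-6) * v11 * v18 + 224 * v11 * v19 + (-216) * v11 * v20 + (-114) * v11 * v21 + (-26) * v11 * v22 + 156 * v11 * v23 + (-2) * v11 * v24 + 22 * v12 * v12 + (-32) * v12 * v13 + 54 * v12 * v14 + (-24) * v12 * v15 + (-86) * v12 * v16 + 2 * v12 * v18 + (-6) * v12 * v19 + (-8) * v12 * v20 + 22 * v12 * v22 +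 (-2) * v12 * v23 + (-2) * v12 * v24 + 996 * v13 * v13 + 484 * v13 * v14 + (-908) * v13 * v15 + 230 * v13 * v16 + 28 * v13 * v17 + 560 * v13 * v19 + (-28) * v13 * v21 + (-956) * v13 * v22 + (-54) * v13 * v23 + 6 * v13 * v24 + 8428 * v14 * v14 + (-3190) * v14 * v15 + (-1118) * v14 * v16 + (-10) * v14 * v17 + (-198) * v14 * v18 + 1538 * v14 * v19 + 1420 * v14 * v20 + (-90) * v14 * v21 + (-2232) * v14 * v22 + 146 * v14 * v23 + (-232) * v14 * v24 + 5262 * v15 * v15 + 358 * v15 * v16 + (-58) * v15 * v17 + (-14) * v15 * v18 + (-1518) * v15 * v19 + 814 * v15 * v20 + 400 * v15 * v21 + 450 * v15 * v22 + (-706) * v15 * v23 + 28 * v15 * v24 + 482 * v16 * v16 + 16 * v16 * v17 + 42 * v16 * v18 + 22 * v16 * v19 + (-788) * v16 * v20 + 94 * v16 * v21 + (-108) * v16 * v22 + (-66) * v16 * v23 + (-30) * v16 * v24 + 8 * v17 * v17 + (-16) * v17 * v18 + 20 * v17 * v19 + (-28) * v17 * v20 + (-32) * v17 * v21 + (-4) * v17 * v22 + (-10) * v17 * v23 + 10 * v17 * v24 + 128 * v18 * v18 + 204 * v18 * v19 + (-68) * v18 * v20 + 50 * v18 * v21 + 58 * v18 * v22 + 44 * v18 * v23 + (-128) * v18 * v24 + 3168 * v19 * v19 + (-788) * v19 * v20 + (-158) * v19 * v21 + 476 * v19 * v22 + 146 * v19 * v23 + (-240) * v19 * v24 + 1614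 * v20 * v20 + 104 * v20 * v21 + (-302) * v20 * v22 + 178 * v20 * v23 + 16 * v20 * v24 + 74 * v21 * v21 + (-20) * v21 * v22 + (-74) * v21 * v23 + (-32) * v21 * v24 + 592 * v22 * v22 + 64 * v22 * v24 + 136 * v23 * v23 + (-32) * v23 * v24 + 48 * v24 * v24.
Definition DEN1 : R := 1152921504606846976.
Definition vlist (v0 v1 v2 v3 v4 v5 v6 v7 v8 v9 v10 v11 v12 v13 v14 v15 v16 v17 v18 v19 v20 v21 v22 v23 v24 : R) : list R := v0 :: v1 :: v2 :: v3 :: v4 :: v5 :: v6 :: v7 :: v8 :: v9 :: v10 :: v11 :: v12 :: v13 :: v14 :: v15 :: v16 :: v17 :: v18 :: v19 :: v20 :: v21 :: v22 :: v23 :: v24 :: nil.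

Lemma stepA v0 v1 v2 v3 v4 v5 v6 v7 v8 v9 v10 v11 v12 v13 v14 v15 v16 v17 v18 v19 v20 v21 v22 v23 v24 :
  16 * sumA cert1 (vlist v0 v1 v2 v3 v4 v5 v6 v7 v8 v9 v10 v11 v12 v13 v14 v15 v16 v17 v18 v19 v20 v21 v22 v23 v24) = DEN1 * qf1 v0 v1 v2 v3 v4 v5 v6 v7 v8 v9 v10 v11 v12 v13 v14 v15 v16 v17 v18 v19 v20 v21 v22 v23 v24.
Proof.
  unfold sumA, cert1, vlist, qf1, DEN1.
  cbn [fold_right linv map fst snd].
  ring.
Qed.

Lemma stepB x1 x2 x3 : 16 * (f1 x1 x2 x3 * Theta1 x1 x2 x3 ^ 2) = qf1 (x1^0*x2^0) (x1^0*x2^1) (x1^0*x2^2) (x1^1*x2^0) (x1^1*x2^1) (x1^1*x2^2) (x1^1*x2^3) (x1^1*x2^4) (x1^2*x2^0) (x1^2*x2^1) (x1^2*x2^2) (x1^2*x2^3) (x1^2*x2^4) (x1^3*x2^0) (x1^3*x2^1) (x1^3*x2^2) (x1^3*x2^3) (x1^3*x2^4) (x1^4*x2^0) (x1^4*x2^1) (x1^4*x2^2) (x1^4*x2^3) (x1^5*x2^1) (x1^5*x2^2) (x1^6*x2^1).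
Proof. unfold f1, Theta1, qf1. field. Qed.

Fixpoint mk (bs : list (nat * nat)) (k : R) (cs : list Z) : list mono :=
  match cs, bs with
  | c :: cs', b :: bs' => Mono (k * IZR c) (fst b) (snd b) 0 :: mk bs' k cs'
  | _, _ => nil end.

Lemma peval_mk bs k cs x1 x2 x3 :
  peval (mk bs k cs) x1 x2 x3 = k * linv (map IZR cs) (map (fun b => x1 ^ fst b * x2 ^ snd b) bs).
Proof.
  revert bs. induction cs as [|c cs IH]; intros [|b bs]; simpl; try ring.
  rewrite IH. unfold mono_eval. simpl. ring.
Qed.

Definition bvals (x1 x2 : R) : list R := map (fun b => x1 ^ fst b * x2 ^ snd b) basis1.

Definition S1 : list (list mono) :=
  map (fun nc => mk basis1 (sqrt (IZR (Zpos (fst nc)) / DEN1)) (snd nc)) cert1.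

Lemma sos_mk_gen (cert : list (positive * list Z)) D x1 x2 x3 : 0 < D ->
  sos_eval (map (fun nc => mk basis1 (sqrt (IZR (Zpos (fst nc)) / D)) (snd nc)) cert) x1 x2 x3
  = sumA cert (bvals x1 x2) / D.
Proof.
  intros HD. unfold sos_eval, sumA. induction cert as [|[n cs] cert IH]; cbn [map fold_right fst snd].
  - field. lra.
  - rewrite IH, peval_mk, Rpow_mult_distr, pow2_sqrt.
    + unfold bvals. field. lra.
    + apply Rmult_le_pos; [apply IZR_le; lia| apply Rlt_le, Rinv_0_lt_compat; exact HD].
Qed.

Lemma DEN1_pos : 0 < DEN1.
Proof. unfold DEN1. lra. Qed.

Lemma S1_eval x1 x2 x3 : sos_eval S1 x1 x2 x3 = f1 x1 x2 x3 * Theta1 x1 x2 x3 ^ 2.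
Proof.
  unfold S1. rewrite (sos_mk_gen cert1 DEN1) by apply DEN1_pos.
  assert (Hb : bvals x1 x2 = vlist (x1^0*x2^0) (x1^0*x2^1) (x1^0*x2^2) (x1^1*x2^0) (x1^1*x2^1) (x1^1*x2^2) (x1^1*x2^3) (x1^1*x2^4) (x1^2*x2^0) (x1^2*x2^1) (x1^2*x2^2) (x1^2*x2^3) (x1^2*x2^4) (x1^3*x2^0) (x1^3*x2^1) (x1^3*x2^2) (x1^3*x2^3) (x1^3*x2^4) (x1^4*x2^0) (x1^4*x2^1) (x1^4*x2^2) (x1^4*x2^3) (x1^5*x2^1) (x1^5*x2^2) (x1^6*x2^1)) by reflexivity.
  rewrite Hb.
  pose proof (stepA (x1^0*x2^0) (x1^0*x2^1) (x1^0*x2^2) (x1^1*x2^0) (x1^1*x2^1) (x1^1*x2^2) (x1^1*x2^3) (x1^1*x2^4) (x1^2*x2^0) (x1^2*x2^1) (x1^2*x2^2) (x1^2*x2^3) (x1^2*x2^4) (x1^3*x2^0) (x1^3*x2^1) (x1^3*x2^2) (x1^3*x2^3) (x1^3*x2^4) (x1^4*x2^0) (x1^4*x2^1) (x1^4*x2^2) (x1^4*x2^3) (x1^5*x2^1) (x1^5*x2^2) (x1^6*x2^1)) as HA.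
  pose proof (stepB x1 x2 x3) as HB.
  pose proof DEN1_pos.
  apply (Rmult_eq_reg_l 16); [|lra].
  rewrite HB. field_simplify_eq; [|lra]. rewrite HA. ring.
Qed.

Lemma mk_in bs k cs : Forall (fun b => (fst b + snd b <= 7)%nat) bs -> poly_in I1 7 (mk bs k cs).
Proof.
  revert bs. induction cs as [|c cs IH]; intros [|b bs] Hb; simpl; try constructor.
  - inversion Hb; subst. unfold mono_in; simpl. repeat split; intros; try (exfalso; lia); auto; lia.
  - apply IH. inversion Hb; auto.
Qed.

Lemma S1_in : Forall (poly_in I1 7) S1.
Proof.
  assert (Hb : forallb (fun b => Nat.leb (fst b + snd b) 7) basis1 = true) by reflexivity.
  assert (Hb' : Forall (fun b => (fst b + snd b <= 7)%nat) basis1).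
  { apply Forall_forall. intros b Hin. rewrite forallb_forall in Hb.
    apply Nat.leb_le. apply Hb. exact Hin. }
  apply Forall_forall. intros p Hp. unfold S1 in Hp. apply in_map_iff in Hp as [nc [<- _]].
  apply mk_in. exact Hb'.
Qed.

Definition S2 : list (list mono) :=
  (Mono 1 5 0 1 :: Mono 1 3 0 3 :: Mono 2 3 0 1 :: Mono 1 1 0 3 :: Mono 1 1 0 1 :: nil) :: nil.

Lemma S2_eval x1 x2 x3 : sos_eval S2 x1 x2 x3 = f2 x1 x2 x3 * Theta2 x1 x2 x3 ^ 2.
Proof. unfold S2, sos_eval, peval, mono_eval, f2, Theta2. simpl. ring. Qed.

Lemma S2_in : Forall (poly_in I2 7) S2.
Proof.
  unfold S2. apply Forall_cons; [|apply Forall_nil]. unfold poly_in.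
  repeat apply Forall_cons; try apply Forall_nil; unfold mono_in; simpl;
    repeat split; intros; try (exfalso; lia); auto; try lia.
Qed.

Lemma Theta1_pos x1 x2 x3 : 0 < Theta1 x1 x2 x3.
Proof. unfold Theta1. pose proof (pow2_ge_0 x1). pose proof (pow2_ge_0 x2). nra. Qed.
Lemma Theta2_pos x1 x2 x3 : 0 < Theta2 x1 x2 x3.
Proof. unfold Theta2. pose proof (pow2_ge_0 x1). pose proof (pow2_ge_0 x3). nra. Qed.

Lemma decomp x1 x2 x3 : fpoly x1 x2 x3 =
  sos_eval S1 x1 x2 x3 / (Theta1 x1 x2 x3) ^ 2 + sos_eval S2 x1 x2 x3 / (Theta2 x1 x2 x3) ^ 2.
Proof.
  rewrite S1_eval, S2_eval. unfold fpoly.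
  pose proof (Theta1_pos x1 x2 x3). pose proof (Theta2_pos x1 x2 x3).
  field. split; lra.
Qed.

Theorem mainTheorem9 :
  (forall x1 x2 x3 : R, 0 <= fpoly x1 x2 x3) /\
  ~ (exists sigma1 sigma2 : R -> R -> R -> R,
        SOS I1 sigma1 /\ SOS I2 sigma2 /\
        forall x1 x2 x3, fpoly x1 x2 x3 = sigma1 x1 x2 x3 + sigma2 x1 x2 x3) /\
  (exists sigma1 sigma2 : R -> R -> R -> R,
        SOS_deg I1 7 sigma1 /\ SOS_deg I2 7 sigma2 /\
        forall x1 x2 x3, fpoly x1 x2 x3 =
          sigma1 x1 x2 x3 / (Theta1 x1 x2 x3) ^ 2
          + sigma2 x1 x2 x3 / (Theta2 x1 x2 x3) ^ 2).
Proof.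
  split; [|split].
  - intros x1 x2 x3. rewrite decomp.
    pose proof (Theta1_pos x1 x2 x3). pose proof (Theta2_pos x1 x2 x3).
    pose proof (sos_eval_nonneg S1 x1 x2 x3). pose proof (sos_eval_nonneg S2 x1 x2 x3).
    assert (0 <= sos_eval S1 x1 x2 x3 / Theta1 x1 x2 x3 ^ 2)
      by (apply Rmult_le_pos; [lra| apply Rlt_le, Rinv_0_lt_compat, pow_lt; lra]).
    assert (0 <= sos_eval S2 x1 x2 x3 / Theta2 x1 x2 x3 ^ 2)
      by (apply Rmult_le_pos; [lra| apply Rlt_le, Rinv_0_lt_compat, pow_lt; lra]).
    lra.
  - exact part2.
  - exists (sos_eval S1), (sos_eval S2). split; [|split].
    + exists S1. split; [exact S1_in| reflexivity].
    + exists S2. split; [exact S2_in| reflexivity].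
    + exact decomp.
Qed.
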